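(* Let $\gamma(s)$ be an arc-length parametrized triharmonic curve with vanishing torsion immersed in a Bianchi–Cartan–Vranceanu space $M(a,b)$ with $4a\neq b^2$. Then the curvature of $\gamma$ is constant.
   Context: For real $a,b$, the BCV space $M(a,b)$ is $\{(x,y,z)\in\mathbb{R}^3:\lambda_a=1+a(x^2+y^2)>0\}$ with the metric $$g_{a,b}=\frac{dx^2+dy^2}{[1+a(x^2+y^2)]^2}+\left(dz+\frac{b}{2}\,\frac{y\,dx-x\,dy}{1+a(x^2+y^2)}\right)^2.$$ For an arc-length parametrized curve $\gamma$ in a Riemannian manifold $M$ with Levi-Civita connection $\nabla$, curvature tensor $R^M(X,Y)=\nabla_X\nabla_Y-\nabla_Y\nabla_X-\nabla_{[X,Y]}$ and $T=\gamma'$, $\gamma$ is triharmonic if $\nabla_T^5T+R^M(\nabla_T^3T,T)T-R^M(\nabla_T^2T,\nabla_TT)T=0$. Curvature $\kappa$ and torsion $\tau$ of a non-geodesic curve are defined by the Frenet equations $\nabla_TT=\kappa N$, $\nabla_TN=-\kappa T+\tau B$, $\nabla_TB=-\tau N$. *)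

(* Defs.v *)
From Stdlib Require Import Reals.
From Coquelicot Require Import Coquelicot.
Open Scope R_scope.

(** Coordinate indices of R^3: I0 = x, I1 = y, I2 = z. *)
Inductive idx := I0 | I1 | I2.

Definition pt := idx -> R.

Definition sum3 (f : idx -> R) : R := f I0 + f I1 + f I2.

Definition idx_eqb (i j : idx) : bool :=
  match i, j with
  | I0, I0 | I1, I1 | I2, I2 => true
  | _, _ => false
  end.

Definition nxt (i : idx) : idx :=
  match i with I0 => I1 | I1 => I2 | I2 => I0 end.

Definition upd (p : pt) (i : idx) (t : R) : pt :=
  fun j => if idx_eqb i j then t else p j.

Definition partial (f : pt -> R) (i : idx) (p : pt) : R :=
  Derive (fun t => f (upd p i t)) (p i).

Definition lam (a : R) (p : pt) : R := 1 + a * (p I0 ^ 2 + p I1 ^ 2).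

(** The BCV metric in coordinates:
    g = (dx^2 + dy^2)/lam^2 + (dz + (b/2)(y dx - x dy)/lam)^2 *)
Definition bcv_metric (a b : R) (p : pt) (i j : idx) : R :=
  let l := lam a p in
  let w (k : idx) : R :=
    match k with
    | I0 => b / 2 * p I1 / l
    | I1 => - (b / 2) * p I0 / l
    | I2 => 1
    end in
  let h (k m : idx) : R :=
    match k, m with
    | I0, I0 => 1 / l ^ 2
    | I1, I1 => 1 / l ^ 2
    | _, _ => 0
    end in
  h i j + w i * w j.

(** cofactor of entry (r,c) of a 3x3 matrix (cyclic formula, sign included) *)
Definition cof3 (m : idx -> idx -> R) (r c : idx) : R :=
  m (nxt r) (nxt c) * m (nxt (nxt r)) (nxt (nxt c))
  - m (nxt r) (nxt (nxt c)) * m (nxt (nxt r)) (nxt c).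

Definition det3 (m : idx -> idx -> R) : R := sum3 (fun c => m I0 c * cof3 m I0 c).

Definition inv3 (m : idx -> idx -> R) (i j : idx) : R := cof3 m j i / det3 m.

Definition bcv_inv (a b : R) (p : pt) : idx -> idx -> R := inv3 (bcv_metric a b p).

Definition Gamma (a b : R) (p : pt) (k i j : idx) : R :=
  1 / 2 * sum3 (fun l => bcv_inv a b p k l *
     (partial (fun q => bcv_metric a b q j l) i p
      + partial (fun q => bcv_metric a b q i l) j p
      - partial (fun q => bcv_metric a b q i j) l p)).

(** Components R^l_{ijk} with R(d_i, d_j) d_k = R^l_{ijk} d_l, for
    R(X,Y) = nabla_X nabla_Y - nabla_Y nabla_X - nabla_[X,Y] *)
Definition Riem (a b : R) (p : pt) (l i j k : idx) : R :=
  partial (fun q => Gamma a b q l j k) i p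
  - partial (fun q => Gamma a b q l i k) j p
  + sum3 (fun m => Gamma a b p l i m * Gamma a b p m j k
                   - Gamma a b p l j m * Gamma a b p m i k).

Definition Rop (a b : R) (p : pt) (X Y Z : pt) : pt :=
  fun l => sum3 (fun i => sum3 (fun j => sum3 (fun k =>
             X i * Y j * Z k * Riem a b p l i j k))).

Definition inner (a b : R) (p : pt) (X Y : pt) : R :=
  sum3 (fun i => sum3 (fun j => bcv_metric a b p i j * X i * Y j)).

Definition vel (gam : R -> pt) (s : R) : pt :=
  fun i => Derive (fun t => gam t i) s.

Definition cov (a b : R) (gam : R -> pt) (V : R -> pt) (s : R) : pt :=
  fun k => Derive (fun t => V t k) s
           + sum3 (fun i => sum3 (fun j =>
               Gamma a b (gam s) k i j * vel gam s i * V s j)).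

Fixpoint covT (a b : R) (gam : R -> pt) (n : nat) : R -> pt :=
  match n with
  | O => vel gam
  | S n' => cov a b gam (covT a b gam n')
  end.

Definition in_open_int (s0 s1 : Rbar) (s : R) : Prop := Rbar_lt s0 s /\ Rbar_lt s s1.

Definition triharmonic (a b : R) (gam : R -> pt) (I : R -> Prop) : Prop :=
  forall s, I s -> forall l : idx,
    covT a b gam 5 s l
    + Rop a b (gam s) (covT a b gam 3 s) (vel gam s) (vel gam s) l
    - Rop a b (gam s) (covT a b gam 2 s) (covT a b gam 1 s) (vel gam s) l = 0.

(* Main.v *)
Require Import Defs.
From Stdlib Require Import Reals Lra Lia Psatz FunctionalExtensionality.
From Coquelicot Require Import Coquelicot.
Open Scope R_scope.

Definition giS (a b : R) (p : pt) (k l : idx) : R :=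
  let x := p I0 in let y := p I1 in let L := lam a p in
  match k, l with
  | I0, I0 => L^2
  | I0, I1 => 0
  | I0, I2 => - (b/2) * y * L
  | I1, I0 => 0
  | I1, I1 => L^2
  | I1, I2 => (b/2) * x * L
  | I2, I0 => - (b/2) * y * L
  | I2, I1 => (b/2) * x * L
  | I2, I2 => 1 + b^2/4 * (x^2 + y^2)
  end.
Definition dgS (a b : R) (p : pt) (i j m : idx) : R :=
  let x := p I0 in let y := p I1 in let L := lam a p in
  match i, j, m with
  | I0, I0, I0 => ((-1)*x*y^2*a*b^2 + (-4)*x*a) / L^3
  | I0, I0, I1 => ((1/2)*x^2*y*a*b^2 + (-(1/2))*y^3*a*b^2 + (-4)*y*a + (1/2)*y*b^2) / L^3
  | I0, I0, I2 => 0
  | I0, I1, I0 => ((3/4)*x^2*y*a*b^2 + (-(1/4))*y^3*a*b^2 + (-(1/4))*y*b^2) / L^3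
  | I0, I1, I1 => ((-(1/4))*x^3*a*b^2 + (3/4)*x*y^2*a*b^2 + (-(1/4))*x*b^2) / L^3
  | I0, I1, I2 => 0
  | I0, I2, I0 => ((-1)*x*y*a*b) / L^2
  | I0, I2, I1 => ((1/2)*x^2*a*b + (-(1/2))*y^2*a*b + (1/2)*b) / L^2
  | I0, I2, I2 => 0
  | I1, I0, I0 => ((3/4)*x^2*y*a*b^2 + (-(1/4))*y^3*a*b^2 + (-(1/4))*y*b^2) / L^3
  | I1, I0, I1 => ((-(1/4))*x^3*a*b^2 + (3/4)*x*y^2*a*b^2 + (-(1/4))*x*b^2) / L^3
  | I1, I0, I2 => 0
  | I1, I1, I0 => ((-(1/2))*x^3*a*b^2 + (1/2)*x*y^2*a*b^2 + (-4)*x*a + (1/2)*x*b^2) / L^3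
  | I1, I1, I1 => ((-1)*x^2*y*a*b^2 + (-4)*y*a) / L^3
  | I1, I1, I2 => 0
  | I1, I2, I0 => ((1/2)*x^2*a*b + (-(1/2))*y^2*a*b + (-(1/2))*b) / L^2
  | I1, I2, I1 => (1*x*y*a*b) / L^2
  | I1, I2, I2 => 0
  | I2, I0, I0 => ((-1)*x*y*a*b) / L^2
  | I2, I0, I1 => ((1/2)*x^2*a*b + (-(1/2))*y^2*a*b + (1/2)*b) / L^2
  | I2, I0, I2 => 0
  | I2, I1, I0 => ((1/2)*x^2*a*b + (-(1/2))*y^2*a*b + (-(1/2))*b) / L^2
  | I2, I1, I1 => (1*x*y*a*b) / L^2
  | I2, I1, I2 => 0
  | I2, I2, I0 => 0
  | I2, I2, I1 => 0
  | I2, I2, I2 => 0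
  end.
Definition GS (a b : R) (p : pt) (k i j : idx) : R :=
  let x := p I0 in let y := p I1 in let L := lam a p in
  match k, i, j with
  | I0, I0, I0 => ((-2)*x*a) / L^1
  | I0, I0, I1 => ((-2)*y*a + (1/4)*y*b^2) / L^1
  | I0, I0, I2 => 0
  | I0, I1, I0 => ((-2)*y*a + (1/4)*y*b^2) / L^1
  | I0, I1, I1 => (2*x*a + (-(1/2))*x*b^2) / L^1
  | I0, I1, I2 => (1/2)*b
  | I0, I2, I0 => 0
  | I0, I2, I1 => (1/2)*b
  | I0, I2, I2 => 0
  | I1, I0, I0 => (2*y*a + (-(1/2))*y*b^2) / L^1
  | I1, I0, I1 => ((-2)*x*a + (1/4)*x*b^2) / L^1
  | I1, I0, I2 => (-(1/2))*b
  | I1, I1, I0 => ((-2)*x*a + (1/4)*x*b^2) / L^1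
  | I1, I1, I1 => ((-2)*y*a) / L^1
  | I1, I1, I2 => 0
  | I1, I2, I0 => (-(1/2))*b
  | I1, I2, I1 => 0
  | I1, I2, I2 => 0
  | I2, I0, I0 => (1*x*y*a*b + (-(1/4))*x*y*b^3) / L^2
  | I2, I0, I1 => ((-(1/2))*x^2*a*b + (1/8)*x^2*b^3 + (1/2)*y^2*a*b + (-(1/8))*y^2*b^3) / L^2
  | I2, I0, I2 => ((-(1/4))*x*b^2) / L^1
  | I2, I1, I0 => ((-(1/2))*x^2*a*b + (1/8)*x^2*b^3 + (1/2)*y^2*a*b + (-(1/8))*y^2*b^3) / L^2
  | I2, I1, I1 => ((-1)*x*y*a*b + (1/4)*x*y*b^3) / L^2
  | I2, I1, I2 => ((-(1/4))*y*b^2) / L^1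
  | I2, I2, I0 => ((-(1/4))*x*b^2) / L^1
  | I2, I2, I1 => ((-(1/4))*y*b^2) / L^1
  | I2, I2, I2 => 0
  end.
Definition DGS (a b : R) (p : pt) (m k i j : idx) : R :=
  let x := p I0 in let y := p I1 in let L := lam a p in
  match m, k, i, j with
  | I0, I0, I0, I0 => (2*x^2*a^2 + (-2)*y^2*a^2 + (-2)*a) / L^2
  | I0, I0, I0, I1 => (4*x*y*a^2 + (-(1/2))*x*y*a*b^2) / L^2
  | I0, I0, I0, I2 => 0
  | I0, I0, I1, I0 => (4*x*y*a^2 + (-(1/2))*x*y*a*b^2) / L^2
  | I0, I0, I1, I1 => ((-2)*x^2*a^2 + (1/2)*x^2*a*b^2 + 2*y^2*a^2 + (-(1/2))*y^2*a*b^2 + 2*a + (-(1/2))*b^2) / L^2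
  | I0, I0, I1, I2 => 0
  | I0, I0, I2, I0 => 0
  | I0, I0, I2, I1 => 0
  | I0, I0, I2, I2 => 0
  | I0, I1, I0, I0 => ((-4)*x*y*a^2 + 1*x*y*a*b^2) / L^2
  | I0, I1, I0, I1 => (2*x^2*a^2 + (-(1/4))*x^2*a*b^2 + (-2)*y^2*a^2 + (1/4)*y^2*a*b^2 + (-2)*a + (1/4)*b^2) / L^2
  | I0, I1, I0, I2 => 0
  | I0, I1, I1, I0 => (2*x^2*a^2 + (-(1/4))*x^2*a*b^2 + (-2)*y^2*a^2 + (1/4)*y^2*a*b^2 + (-2)*a + (1/4)*b^2) / L^2
  | I0, I1, I1, I1 => (4*x*y*a^2) / L^2
  | I0, I1, I1, I2 => 0
  | I0, I1, I2, I0 => 0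
  | I0, I1, I2, I1 => 0
  | I0, I1, I2, I2 => 0
  | I0, I2, I0, I0 => ((-3)*x^2*y*a^2*b + (3/4)*x^2*y*a*b^3 + 1*y^3*a^2*b + (-(1/4))*y^3*a*b^3 + 1*y*a*b + (-(1/4))*y*b^3) / L^3
  | I0, I2, I0, I1 => (1*x^3*a^2*b + (-(1/4))*x^3*a*b^3 + (-3)*x*y^2*a^2*b + (3/4)*x*y^2*a*b^3 + (-1)*x*a*b + (1/4)*x*b^3) / L^3
  | I0, I2, I0, I2 => ((1/4)*x^2*a*b^2 + (-(1/4))*y^2*a*b^2 + (-(1/4))*b^2) / L^2
  | I0, I2, I1, I0 => (1*x^3*a^2*b + (-(1/4))*x^3*a*b^3 + (-3)*x*y^2*a^2*b + (3/4)*x*y^2*a*b^3 + (-1)*x*a*b + (1/4)*x*b^3) / L^3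
  | I0, I2, I1, I1 => (3*x^2*y*a^2*b + (-(3/4))*x^2*y*a*b^3 + (-1)*y^3*a^2*b + (1/4)*y^3*a*b^3 + (-1)*y*a*b + (1/4)*y*b^3) / L^3
  | I0, I2, I1, I2 => ((1/2)*x*y*a*b^2) / L^2
  | I0, I2, I2, I0 => ((1/4)*x^2*a*b^2 + (-(1/4))*y^2*a*b^2 + (-(1/4))*b^2) / L^2
  | I0, I2, I2, I1 => ((1/2)*x*y*a*b^2) / L^2
  | I0, I2, I2, I2 => 0
  | I1, I0, I0, I0 => (4*x*y*a^2) / L^2
  | I1, I0, I0, I1 => ((-2)*x^2*a^2 + (1/4)*x^2*a*b^2 + 2*y^2*a^2 + (-(1/4))*y^2*a*b^2 + (-2)*a + (1/4)*b^2) / L^2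
  | I1, I0, I0, I2 => 0
  | I1, I0, I1, I0 => ((-2)*x^2*a^2 + (1/4)*x^2*a*b^2 + 2*y^2*a^2 + (-(1/4))*y^2*a*b^2 + (-2)*a + (1/4)*b^2) / L^2
  | I1, I0, I1, I1 => ((-4)*x*y*a^2 + 1*x*y*a*b^2) / L^2
  | I1, I0, I1, I2 => 0
  | I1, I0, I2, I0 => 0
  | I1, I0, I2, I1 => 0
  | I1, I0, I2, I2 => 0
  | I1, I1, I0, I0 => (2*x^2*a^2 + (-(1/2))*x^2*a*b^2 + (-2)*y^2*a^2 + (1/2)*y^2*a*b^2 + 2*a + (-(1/2))*b^2) / L^2
  | I1, I1, I0, I1 => (4*x*y*a^2 + (-(1/2))*x*y*a*b^2) / L^2
  | I1, I1, I0, I2 => 0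
  | I1, I1, I1, I0 => (4*x*y*a^2 + (-(1/2))*x*y*a*b^2) / L^2
  | I1, I1, I1, I1 => ((-2)*x^2*a^2 + 2*y^2*a^2 + (-2)*a) / L^2
  | I1, I1, I1, I2 => 0
  | I1, I1, I2, I0 => 0
  | I1, I1, I2, I1 => 0
  | I1, I1, I2, I2 => 0
  | I1, I2, I0, I0 => (1*x^3*a^2*b + (-(1/4))*x^3*a*b^3 + (-3)*x*y^2*a^2*b + (3/4)*x*y^2*a*b^3 + 1*x*a*b + (-(1/4))*x*b^3) / L^3
  | I1, I2, I0, I1 => (3*x^2*y*a^2*b + (-(3/4))*x^2*y*a*b^3 + (-1)*y^3*a^2*b + (1/4)*y^3*a*b^3 + 1*y*a*b + (-(1/4))*y*b^3) / L^3
  | I1, I2, I0, I2 => ((1/2)*x*y*a*b^2) / L^2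
  | I1, I2, I1, I0 => (3*x^2*y*a^2*b + (-(3/4))*x^2*y*a*b^3 + (-1)*y^3*a^2*b + (1/4)*y^3*a*b^3 + 1*y*a*b + (-(1/4))*y*b^3) / L^3
  | I1, I2, I1, I1 => ((-1)*x^3*a^2*b + (1/4)*x^3*a*b^3 + 3*x*y^2*a^2*b + (-(3/4))*x*y^2*a*b^3 + (-1)*x*a*b + (1/4)*x*b^3) / L^3
  | I1, I2, I1, I2 => ((-(1/4))*x^2*a*b^2 + (1/4)*y^2*a*b^2 + (-(1/4))*b^2) / L^2
  | I1, I2, I2, I0 => ((1/2)*x*y*a*b^2) / L^2
  | I1, I2, I2, I1 => ((-(1/4))*x^2*a*b^2 + (1/4)*y^2*a*b^2 + (-(1/4))*b^2) / L^2
  | I1, I2, I2, I2 => 0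
  | I2, I0, I0, I0 => 0
  | I2, I0, I0, I1 => 0
  | I2, I0, I0, I2 => 0
  | I2, I0, I1, I0 => 0
  | I2, I0, I1, I1 => 0
  | I2, I0, I1, I2 => 0
  | I2, I0, I2, I0 => 0
  | I2, I0, I2, I1 => 0
  | I2, I0, I2, I2 => 0
  | I2, I1, I0, I0 => 0
  | I2, I1, I0, I1 => 0
  | I2, I1, I0, I2 => 0
  | I2, I1, I1, I0 => 0
  | I2, I1, I1, I1 => 0
  | I2, I1, I1, I2 => 0
  | I2, I1, I2, I0 => 0
  | I2, I1, I2, I1 => 0
  | I2, I1, I2, I2 => 0
  | I2, I2, I0, I0 => 0
  | I2, I2, I0, I1 => 0
  | I2, I2, I0, I2 => 0
  | I2, I2, I1, I0 => 0
  | I2, I2, I1, I1 => 0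
  | I2, I2, I1, I2 => 0
  | I2, I2, I2, I0 => 0
  | I2, I2, I2, I1 => 0
  | I2, I2, I2, I2 => 0
  end.

Ltac nzL HL := let Hc := fresh in intro Hc; apply HL; unfold lam; rewrite <- Hc; ring.
Ltac nz HL := match goal with
  | |- ?x * ?y <> 0 => apply Rmult_integral_contrapositive_currified; nz HL
  | |- ?x ^ _ <> 0 => apply pow_nonzero; nz HL
  | |- 1 <> 0 => exact R1_neq_R0
  | |- 2 <> 0 => lra
  | |- 4 <> 0 => lra
  | |- _ => nzL HL end.

Lemma met_partial (a b : R) (p : pt) (i j m : idx) : lam a p <> 0 ->
  partial (fun q => bcv_metric a b q i j) m p = dgS a b p i j m.
Proof.
  intros HL. unfold partial.
  destruct i, j, m; unfold bcv_metric, upd, dgS, lam; simpl;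
  apply is_derive_unique; auto_derive;
  repeat split; try exact I; try (nz HL); try reflexivity;
  unfold lam in *; field; repeat split; nz HL.
Qed.

Lemma det_met (a b : R) (p : pt) : lam a p <> 0 ->
  det3 (bcv_metric a b p) = 1 / (lam a p)^4.
Proof.
  intros HL. unfold det3, sum3, cof3, bcv_metric; simpl.
  field. auto.
Qed.

Lemma inv_eq (a b : R) (p : pt) (k l : idx) : lam a p <> 0 ->
  bcv_inv a b p k l = giS a b p k l.
Proof.
  intros HL. unfold bcv_inv, inv3. rewrite det_met by auto.
  destruct k, l; unfold cof3, bcv_metric, giS; simpl; field; auto.
Qed.

Lemma Gamma_eq (a b : R) (p : pt) (k i j : idx) : lam a p <> 0 ->
  Gamma a b p k i j = GS a b p k i j.
Proof.
  intros HL. unfold Gamma, sum3. rewrite !met_partial by auto.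
  rewrite !inv_eq by auto.
  destruct k, i, j; unfold giS, dgS, GS; simpl; field; auto.
Qed.

Lemma cont_pos (f : R -> R) (x : R) : continuous f x -> 0 < f x ->
  locally x (fun t => 0 < f t).
Proof.
  intros Hc Hp. apply Hc. apply (open_gt 0). exact Hp.
Qed.

Lemma cont_neq (f : R -> R) (x : R) : continuous f x -> f x <> 0 ->
  locally x (fun t => f t <> 0).
Proof.
  intros Hc Hp. exact (Hc _ (open_neq 0 (f x) Hp)).
Qed.

Lemma lam_line_loc (a : R) (p : pt) (i : idx) : 0 < lam a p ->
  locally (p i) (fun t => 0 < lam a (upd p i t)).
Proof.
  intros H. refine (cont_pos (fun t => lam a (upd p i t)) (p i) _ _).
  - apply (ex_derive_continuous (K:=R_AbsRing) (V:=R_NormedModule)). destruct i; unfold lam, upd; simpl; auto_derive; auto.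
  - replace (lam a (upd p i (p i))) with (lam a p); auto.
    destruct i; unfold lam, upd; simpl; auto.
Qed.

Lemma Gamma_line (a b : R) (p : pt) (i l j k : idx) : 0 < lam a p ->
  partial (fun q => Gamma a b q l j k) i p = DGS a b p i l j k.
Proof.
  intros HL. unfold partial.
  rewrite (Derive_ext_loc _ (fun t => GS a b (upd p i t) l j k)).
  2: { generalize (lam_line_loc a p i HL). apply filter_imp. intros t Ht.
       apply Gamma_eq. lra. }
  assert (HL' : lam a p <> 0) by lra. clear HL.
  destruct i, l, j, k; unfold GS, DGS, upd, lam; simpl;
  apply is_derive_unique; auto_derive;
  repeat split; try exact I; try (nz HL'); try reflexivity;
  unfold lam in *; field; repeat split; nz HL'.
Qed.

Definition dl (l i : idx) : R := if idx_eqb l i then 1 else 0.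

Definition RF (a b : R) (p : pt) (l i j k : idx) : R :=
  let g := bcv_metric a b p in
  let c1 := 4*a - 3/4*b^2 in let c2 := 4*a - b^2 in
  c1 * (g j k * dl l i - g i k * dl l j)
  + c2 * (g i I2 * g k I2 * dl l j - g j I2 * g k I2 * dl l i
          + g i k * g j I2 * dl l I2 - g j k * g i I2 * dl l I2).

Lemma Riem_eq (a b : R) (p : pt) (l i j k : idx) : 0 < lam a p ->
  Riem a b p l i j k = RF a b p l i j k.
Proof.
  intros HL. unfold Riem. rewrite !Gamma_line by auto.
  unfold sum3. assert (HL' : lam a p <> 0) by lra.
  rewrite !Gamma_eq by auto. clear HL.
  destruct l, i, j, k; unfold RF, DGS, GS, dl, bcv_metric; simpl; unfold lam in *; field; auto.
Qed.

Definition ez : pt := fun j => match j with I2 => 1 | _ => 0 end.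

Lemma met_sym (a b : R) (p : pt) (i j : idx) : bcv_metric a b p i j = bcv_metric a b p j i.
Proof. destruct i, j; unfold bcv_metric; simpl; ring. Qed.

Lemma inner_sym (a b : R) (p : pt) (X Y : pt) : inner a b p X Y = inner a b p Y X.
Proof.
  unfold inner, sum3. rewrite (met_sym a b p I0 I1), (met_sym a b p I0 I2), (met_sym a b p I1 I2). ring.
Qed.

Lemma inner_comb3 (a b : R) (p : pt) (x y z : R) (X Y Z V : pt) :
  inner a b p (fun l => x * X l + y * Y l + z * Z l) V
  = x * inner a b p X V + y * inner a b p Y V + z * inner a b p Z V.
Proof. unfold inner, sum3. ring. Qed.

Lemma inner_comb2 (a b : R) (p : pt) (x y : R) (X Y V : pt) :
  inner a b p (fun l => x * X l + y * Y l) V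
  = x * inner a b p X V + y * inner a b p Y V.
Proof. unfold inner, sum3. ring. Qed.

Lemma inner_ext (a b : R) (p : pt) (X Y V : pt) : (forall l, X l = Y l) ->
  inner a b p X V = inner a b p Y V.
Proof. intros H. unfold inner, sum3. rewrite !H. ring. Qed.

Definition c1 (a b : R) := 4*a - 3/4*b^2.
Definition c2 (a b : R) := 4*a - b^2.

Lemma Rop_formula (a b : R) (p : pt) (X Y Z : pt) (l : idx) : 0 < lam a p ->
  Rop a b p X Y Z l =
  (c1 a b * inner a b p Y Z - c2 a b * inner a b p Y ez * inner a b p Z ez) * X l
  + (- c1 a b * inner a b p X Z + c2 a b * inner a b p X ez * inner a b p Z ez) * Y l
  + (c2 a b * (inner a b p X Z * inner a b p Y ez - inner a b p Y Z * inner a b p X ez)) * ez l.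
Proof.
  intros HL. unfold Rop, sum3. rewrite !Riem_eq by auto.
  unfold RF, inner, sum3, c1, c2, dl, ez. destruct l; simpl; ring.
Qed.

Lemma inner_Rop (a b : R) (p : pt) (X Y Z V : pt) : 0 < lam a p ->
  inner a b p (Rop a b p X Y Z) V =
  (c1 a b * inner a b p Y Z - c2 a b * inner a b p Y ez * inner a b p Z ez) * inner a b p X V
  + (- c1 a b * inner a b p X Z + c2 a b * inner a b p X ez * inner a b p Z ez) * inner a b p Y V
  + (c2 a b * (inner a b p X Z * inner a b p Y ez - inner a b p Y Z * inner a b p X ez)) * inner a b p ez V.
Proof.
  intros HL. rewrite <- inner_comb3. apply inner_ext. intros l. apply Rop_formula. auto.
Qed.

Definition Wv (a b : R) (p : pt) (X : pt) : pt :=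
  fun k => sum3 (fun i => sum3 (fun j => Gamma a b p k i j * X i * ez j)).

Lemma Wv_eq (a b : R) (p : pt) (X : pt) (k : idx) : lam a p <> 0 ->
  Wv a b p X k = sum3 (fun i => GS a b p k i I2 * X i).
Proof.
  intros HL. unfold Wv, sum3, ez. rewrite !Gamma_eq by auto. ring.
Qed.

Ltac Wtac HL := unfold inner, sum3; rewrite !Wv_eq by auto;
  unfold sum3, GS, bcv_metric, ez; simpl; unfold lam in *; field; auto.

Lemma W1 (a b : R) (p : pt) (X : pt) : lam a p <> 0 -> inner a b p X (Wv a b p X) = 0.
Proof. intros HL. Wtac HL. Qed.
Lemma W2 (a b : R) (p : pt) (X : pt) : lam a p <> 0 -> inner a b p ez (Wv a b p X) = 0.
Proof. intros HL. Wtac HL. Qed.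
Lemma W3 (a b : R) (p : pt) (X : pt) : lam a p <> 0 ->
  inner a b p (Wv a b p X) (Wv a b p X) = b^2/4 * (inner a b p X X - (inner a b p X ez)^2).
Proof. intros HL. Wtac HL. Qed.
Lemma W0 (a b : R) (p : pt) (X : pt) (k : idx) : lam a p <> 0 -> b = 0 -> Wv a b p X k = 0.
Proof. intros HL Hb. subst b. rewrite Wv_eq by auto. destruct k; unfold sum3, GS; simpl; field; auto. Qed.
Lemma ez_ez (a b : R) (p : pt) : inner a b p ez ez = 1.
Proof. unfold inner, sum3, ez, bcv_metric; simpl. ring. Qed.

Definition mk3 (x y z : R) : pt := fun i => match i with I0 => x | I1 => y | I2 => z end.

Definition covS (a b : R) (p T : pt) (dV V : pt) : pt :=
  fun k => dV k + sum3 (fun i => sum3 (fun j => GS a b p k i j * T i * V j)).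

Lemma inner_deriv_core (a b : R) (x y v0 v1 v2 w0 w1 w2 : R -> R) (s dx dy dz : R) :
  is_derive x s dx -> is_derive y s dy ->
  ex_derive v0 s -> ex_derive v1 s -> ex_derive v2 s ->
  ex_derive w0 s -> ex_derive w1 s -> ex_derive w2 s ->
  lam a (mk3 (x s) (y s) 0) <> 0 ->
  is_derive (fun t => inner a b (mk3 (x t) (y t) 0) (mk3 (v0 t) (v1 t) (v2 t)) (mk3 (w0 t) (w1 t) (w2 t))) s
   (inner a b (mk3 (x s) (y s) 0)
      (covS a b (mk3 (x s) (y s) 0) (mk3 dx dy dz) (mk3 (Derive v0 s) (Derive v1 s) (Derive v2 s)) (mk3 (v0 s) (v1 s) (v2 s)))
      (mk3 (w0 s) (w1 s) (w2 s))
    + inner a b (mk3 (x s) (y s) 0) (mk3 (v0 s) (v1 s) (v2 s))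
      (covS a b (mk3 (x s) (y s) 0) (mk3 dx dy dz) (mk3 (Derive w0 s) (Derive w1 s) (Derive w2 s)) (mk3 (w0 s) (w1 s) (w2 s)))).
Proof.
  intros Hx Hy Hv0 Hv1 Hv2 Hw0 Hw1 Hw2 HL.
  unfold inner, covS, sum3, bcv_metric, GS, mk3, lam in *; simpl in *.
  auto_derive.
  - repeat split; try exact I; try (eexists; eassumption); auto; nz HL.
  - assert (Hx' : Derive (fun t => x t) s = dx) by (apply is_derive_unique; exact Hx).
    assert (Hy' : Derive (fun t => y t) s = dy) by (apply is_derive_unique; exact Hy).
    rewrite Hx', Hy'. cbv zeta. match goal with |- ?A = ?B => change (@eq R A B) end.
    change (Derive (fun t => v0 t) s) with (Derive v0 s);
    change (Derive (fun t => v1 t) s) with (Derive v1 s);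
    change (Derive (fun t => v2 t) s) with (Derive v2 s);
    change (Derive (fun t => w0 t) s) with (Derive w0 s);
    change (Derive (fun t => w1 t) s) with (Derive w1 s);
    change (Derive (fun t => w2 t) s) with (Derive w2 s).
    field. nz HL.
Qed.

Lemma GS_mk3 (a b : R) (p : pt) (k i j : idx) :
  GS a b p k i j = GS a b (mk3 (p I0) (p I1) 0) k i j.
Proof. destruct k, i, j; unfold GS, mk3, lam; simpl; reflexivity. Qed.

Lemma met_mk3 (a b : R) (p : pt) (i j : idx) :
  bcv_metric a b p i j = bcv_metric a b (mk3 (p I0) (p I1) 0) i j.
Proof. destruct i, j; unfold bcv_metric, mk3, lam; simpl; reflexivity. Qed.

Lemma inner_mk3 (a b : R) (p X Y : pt) :
  inner a b p X Y = inner a b (mk3 (p I0) (p I1) 0) (mk3 (X I0) (X I1) (X I2)) (mk3 (Y I0) (Y I1) (Y I2)).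
Proof. unfold inner, sum3. rewrite !(met_mk3 a b p). unfold mk3. reflexivity. Qed.

Lemma cov_covS (a b : R) (gam : R -> pt) (V : R -> pt) (s : R) (k : idx) :
  lam a (gam s) <> 0 ->
  cov a b gam V s k = covS a b (mk3 (gam s I0) (gam s I1) 0)
      (mk3 (vel gam s I0) (vel gam s I1) (vel gam s I2))
      (mk3 (Derive (fun t => V t I0) s) (Derive (fun t => V t I1) s) (Derive (fun t => V t I2) s))
      (mk3 (V s I0) (V s I1) (V s I2)) k.
Proof.
  intros HL. unfold cov, covS, sum3. rewrite !Gamma_eq by auto. rewrite !(GS_mk3 a b (gam s)).
  destruct k; unfold mk3; reflexivity.
Qed.

Lemma inner_deriv (a b : R) (gam V W : R -> pt) (s : R) :
  0 < lam a (gam s) ->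
  (forall k, ex_derive (fun t => gam t k) s) ->
  (forall k, ex_derive (fun t => V t k) s) ->
  (forall k, ex_derive (fun t => W t k) s) ->
  is_derive (fun t => inner a b (gam t) (V t) (W t)) s
    (inner a b (gam s) (cov a b gam V s) (W s) + inner a b (gam s) (V s) (cov a b gam W s)).
Proof.
  intros HL Hg HV HW.
  assert (HL' : lam a (gam s) <> 0) by lra.
  assert (E : forall X Y, inner a b (gam s) X Y = inner a b (mk3 (gam s I0) (gam s I1) 0) (mk3 (X I0) (X I1) (X I2)) (mk3 (Y I0) (Y I1) (Y I2))) by (intros; apply inner_mk3).
  rewrite !E. clear E.
  assert (EV : forall k, cov a b gam V s k = covS a b (mk3 (gam s I0) (gam s I1) 0)
      (mk3 (vel gam s I0) (vel gam s I1) (vel gam s I2))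
      (mk3 (Derive (fun t => V t I0) s) (Derive (fun t => V t I1) s) (Derive (fun t => V t I2) s))
      (mk3 (V s I0) (V s I1) (V s I2)) k) by (intros; apply cov_covS; auto).
  assert (EW : forall k, cov a b gam W s k = covS a b (mk3 (gam s I0) (gam s I1) 0)
      (mk3 (vel gam s I0) (vel gam s I1) (vel gam s I2))
      (mk3 (Derive (fun t => W t I0) s) (Derive (fun t => W t I1) s) (Derive (fun t => W t I2) s))
      (mk3 (W s I0) (W s I1) (W s I2)) k) by (intros; apply cov_covS; auto).
  rewrite !EV, !EW.
  assert (C : forall Z : pt, mk3 (Z I0) (Z I1) (Z I2) = Z).
  { intros Z. apply functional_extensionality. intros [| |]; reflexivity. }
  rewrite !C.
  eapply is_derive_ext.
  2: { apply (inner_deriv_core a b (fun t => gam t I0) (fun t => gam t I1)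
         (fun t => V t I0) (fun t => V t I1) (fun t => V t I2)
         (fun t => W t I0) (fun t => W t I1) (fun t => W t I2) s
         (vel gam s I0) (vel gam s I1) (vel gam s I2)); auto;
       try (apply Derive_correct; apply Hg);
       try (unfold lam, mk3 in *; simpl; exact HL'). }
  intros t. simpl. rewrite (inner_mk3 a b (gam t)). reflexivity.
Qed.

Lemma J_open (s0 s1 : Rbar) (t : R) : in_open_int s0 s1 t -> locally t (in_open_int s0 s1).
Proof.
  intros Ht. apply (open_and (T:=R_UniformSpace) (fun u : R => Rbar_lt s0 u) (fun u : R => Rbar_lt u s1)).
  - apply open_Rbar_gt.
  - apply open_Rbar_lt.
  - exact Ht.
Qed.

Lemma cov_comb (a b : R) (gam V X Y : R -> pt) (al be : R -> R) (dal dbe s : R) :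
  locally s (fun t => forall k, V t k = al t * X t k + be t * Y t k) ->
  is_derive al s dal -> is_derive be s dbe ->
  (forall k, ex_derive (fun t => X t k) s) -> (forall k, ex_derive (fun t => Y t k) s) ->
  forall k, cov a b gam V s k =
    dal * X s k + al s * cov a b gam X s k + dbe * Y s k + be s * cov a b gam Y s k.
Proof.
  intros Hloc Ha Hb HX HY k.
  assert (H0 := locally_singleton _ _ Hloc). simpl in H0.
  unfold cov.
  rewrite (Derive_ext_loc _ (fun t => al t * X t k + be t * Y t k)).
  2: { generalize Hloc. apply filter_imp. intros t Ht. apply Ht. }
  rewrite Derive_plus.
  2: { apply ex_derive_mult. eexists; eauto. apply HX. }
  2: { apply ex_derive_mult. eexists; eauto. apply HY. }
  rewrite !Derive_mult; try (eexists; eassumption); auto.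
  rewrite (is_derive_unique _ _ _ Ha), (is_derive_unique _ _ _ Hb).
  unfold sum3. rewrite !H0. ring.
Qed.

Fixpoint Smn (J : R -> Prop) (n : nat) (f : R -> R) : Prop :=
  match n with
  | O => True
  | S n => (forall t, J t -> ex_derive f t) /\ Smn J n (Derive f)
  end.

Definition Sm (J : R -> Prop) (f : R -> R) : Prop := forall n, Smn J n f.

Definition Jopen (J : R -> Prop) : Prop := forall t, J t -> locally t J.

Lemma loc_eq (J : R -> Prop) (f g : R -> R) (t : R) : Jopen J -> J t ->
  (forall u, J u -> f u = g u) -> locally t (fun u => f u = g u).
Proof.
  intros Jo Ht H. generalize (Jo t Ht). apply filter_imp. exact H.
Qed.

Lemma Smn_ext (J : R -> Prop) (Jo : Jopen J) (n : nat) : forall f g,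
  (forall t, J t -> f t = g t) -> Smn J n f -> Smn J n g.
Proof.
  induction n as [|n IH]; intros f g E Hf; simpl; auto.
  destruct Hf as [Hd Hn]. split.
  - intros t Ht. apply (ex_derive_ext_loc f g t); auto. apply (loc_eq J); auto.
  - apply (IH (Derive f)); auto. intros t Ht. apply Derive_ext_loc. apply (loc_eq J); auto.
Qed.

Lemma Smn_S (J : R -> Prop) (n : nat) : forall f, Smn J (S n) f -> Smn J n f.
Proof.
  induction n as [|n IH]; intros f Hf; simpl in *; auto.
  destruct Hf as [Hd [Hd' Hn]]. split; auto.
Qed.

Lemma Smn_const (J : R -> Prop) (Jo : Jopen J) (n : nat) : forall c, Smn J n (fun _ => c).
Proof.
  induction n as [|n IH]; intros c; simpl; auto. split.
  - intros. apply ex_derive_const.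
  - apply (Smn_ext J Jo n (fun _ => 0)); auto. intros t _. rewrite Derive_const. auto.
Qed.

Lemma Smn_ops (J : R -> Prop) (Jo : Jopen J) (n : nat) :
  (forall f g, Smn J n f -> Smn J n g -> Smn J n (fun t => f t + g t)) /\
  (forall f g, Smn J n f -> Smn J n g -> Smn J n (fun t => f t * g t)) /\
  (forall f, Smn J n f -> (forall t, J t -> f t <> 0) -> Smn J n (fun t => / f t)) /\
  (forall f, Smn J n f -> (forall t, J t -> 0 < f t) -> Smn J n (fun t => sqrt (f t))).
Proof.
  induction n as [|n [IHp [IHm [IHi IHs]]]].
  { simpl; repeat split; auto. }
  assert (Pp : forall f g, Smn J (S n) f -> Smn J (S n) g -> Smn J (S n) (fun t => f t + g t)).
  { intros f g [Df Hf] [Dg Hg]. split.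
    - intros t Ht. exact (ex_derive_plus f g t (Df t Ht) (Dg t Ht)).
    - apply (Smn_ext J Jo n (fun t => Derive f t + Derive g t)); auto.
      intros t Ht. rewrite Derive_plus; auto. }
  assert (Pm : forall f g, Smn J (S n) f -> Smn J (S n) g -> Smn J (S n) (fun t => f t * g t)).
  { intros f g Sf Sg. pose proof Sf as [Df Hf]. pose proof Sg as [Dg Hg]. split.
    - intros t Ht. exact (ex_derive_mult f g t (Df t Ht) (Dg t Ht)).
    - apply (Smn_ext J Jo n (fun t => Derive f t * g t + f t * Derive g t)); auto.
      + intros t Ht. rewrite Derive_mult; auto.
      + apply IHp; apply IHm; auto; apply Smn_S; auto. }
  assert (Pi : forall f, Smn J (S n) f -> (forall t, J t -> f t <> 0) -> Smn J (S n) (fun t => / f t)).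
  { intros f Sf Hnz. pose proof Sf as [Df Hf]. split.
    - intros t Ht. apply ex_derive_inv; auto.
    - apply (Smn_ext J Jo n (fun t => (fun _ => -1) t * Derive f t * ((/ f t) * (/ f t)))).
      + intros t Ht. rewrite Derive_inv; auto. field. auto.
      + apply IHm. apply IHm. apply Smn_const; auto. auto.
        apply IHm; apply IHi; auto; apply Smn_S; auto. }
  split; [exact Pp|]. split; [exact Pm|]. split; [exact Pi|].
  intros f Sf Hpos. pose proof Sf as [Df Hf]. split.
  - intros t Ht. destruct (Df t Ht) as [df Hdf]. exists (df / (2 * sqrt (f t))).
    apply is_derive_sqrt; auto.
  - apply (Smn_ext J Jo n (fun t => Derive f t * ((fun _ => /2) t * / (sqrt (f t))))).
    + intros t Ht. destruct (Df t Ht) as [df Hdf].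
      replace (Derive (fun u => sqrt (f u)) t) with (df / (2 * sqrt (f t)))
        by (symmetry; apply is_derive_unique; apply is_derive_sqrt; auto).
      rewrite (is_derive_unique _ _ _ Hdf). field.
      apply Rgt_not_eq. apply sqrt_lt_R0. auto.
    + apply IHm; auto. apply IHm. apply Smn_const; auto.
      apply IHi. apply IHs; auto. apply Smn_S; auto.
      intros t Ht. apply Rgt_not_eq. apply sqrt_lt_R0. auto.
Qed.



Lemma Sm_plus J (Jo : Jopen J) f g : Sm J f -> Sm J g -> Sm J (fun t => f t + g t).
Proof. intros Hf Hg n. apply (Smn_ops J Jo n); auto. Qed.
Lemma Sm_mult J (Jo : Jopen J) f g : Sm J f -> Sm J g -> Sm J (fun t => f t * g t).
Proof. intros Hf Hg n. apply (Smn_ops J Jo n); auto. Qed.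
Lemma Sm_inv J (Jo : Jopen J) f : Sm J f -> (forall t, J t -> f t <> 0) -> Sm J (fun t => / f t).
Proof. intros Hf Hnz n. apply (Smn_ops J Jo n); auto. Qed.
Lemma Sm_sqrt J (Jo : Jopen J) f : Sm J f -> (forall t, J t -> 0 < f t) -> Sm J (fun t => sqrt (f t)).
Proof. intros Hf Hnz n. apply (Smn_ops J Jo n); auto. Qed.
Lemma Sm_const J (Jo : Jopen J) c : Sm J (fun _ => c).
Proof. intros n. apply Smn_const; auto. Qed.
Lemma Sm_ext J (Jo : Jopen J) f g : (forall t, J t -> f t = g t) -> Sm J f -> Sm J g.
Proof. intros E Hf n. apply (Smn_ext J Jo n f); auto. Qed.
Lemma Sm_opp J (Jo : Jopen J) f : Sm J f -> Sm J (fun t => - f t).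
Proof.
  intros Hf. apply (Sm_ext J Jo (fun t => (fun _ => -1) t * f t)).
  intros; ring. apply Sm_mult; auto. apply Sm_const; auto.
Qed.
Lemma Sm_minus J (Jo : Jopen J) f g : Sm J f -> Sm J g -> Sm J (fun t => f t - g t).
Proof. intros Hf Hg. apply Sm_plus; auto. apply Sm_opp; auto. Qed.
Lemma Sm_div J (Jo : Jopen J) f g : Sm J f -> Sm J g -> (forall t, J t -> g t <> 0) -> Sm J (fun t => f t / g t).
Proof. intros Hf Hg Hnz. apply Sm_mult; auto. apply Sm_inv; auto. Qed.
Lemma Sm_pow J (Jo : Jopen J) f (k : nat) : Sm J f -> Sm J (fun t => f t ^ k).
Proof.
  intros Hf. induction k as [|k IH]; simpl.
  - apply Sm_const; auto.
  - apply Sm_mult; auto.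
Qed.
Lemma Sm_D J f : Sm J f -> Sm J (Derive f).
Proof. intros Hf n. exact (proj2 (Hf (S n))). Qed.
Lemma Sm_Dn J f (k : nat) : Sm J f -> Sm J (Derive_n f k).
Proof. intros Hf. induction k as [|k IH]; simpl; auto. apply Sm_D; auto. Qed.
Lemma Sm_ex J f t : Sm J f -> J t -> ex_derive f t.
Proof. intros Hf Ht. exact (proj1 (Hf 1%nat) t Ht). Qed.
Lemma Sm_of_exn J f : (forall t, J t -> forall n, ex_derive_n f n t) -> Sm J f.
Proof.
  intros H.
  assert (K : forall n k, Smn J n (Derive_n f k)).
  { induction n as [|n IH]; intros k; simpl; auto. split.
    - intros t Ht. exact (H t Ht (S k)).
    - exact (IH (S k)). }
  intros n. exact (K n 0%nat).
Qed.

Ltac smtl Jo leaf := repeat first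
  [ leaf | apply (Sm_plus _ Jo) | apply (Sm_minus _ Jo) | apply (Sm_mult _ Jo)
  | apply (Sm_div _ Jo) | apply (Sm_opp _ Jo) | apply (Sm_pow _ Jo)
  | apply (Sm_inv _ Jo) | apply (Sm_sqrt _ Jo) | apply (Sm_const _ Jo) | assumption ].

Ltac smt Jo := smtl Jo fail.

Definition ip (g : idx -> idx -> R) (X Y : pt) : R :=
  sum3 (fun i => sum3 (fun j => g i j * X i * Y j)).

Lemma parseval_gen (g : idx -> idx -> R) (T N B X Y : pt) :
  (forall i j, g i j = g j i) ->
  ip g T T = 1 -> ip g N N = 1 -> ip g B B = 1 ->
  ip g T N = 0 -> ip g T B = 0 -> ip g N B = 0 ->
  ip g X Y = ip g X T * ip g Y T + ip g X N * ip g Y N + ip g X B * ip g Y B.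
Proof.
  intros Hs HTT HNN HBB HTN HTB HNB.
  assert (HNT : ip g N T = 0) by (rewrite <- HTN; unfold ip, sum3; rewrite !(Hs I1 I0), !(Hs I2 I0), !(Hs I2 I1); ring).
  assert (HBT : ip g B T = 0) by (rewrite <- HTB; unfold ip, sum3; rewrite !(Hs I1 I0), !(Hs I2 I0), !(Hs I2 I1); ring).
  assert (HBN : ip g B N = 0) by (rewrite <- HNB; unfold ip, sum3; rewrite !(Hs I1 I0), !(Hs I2 I0), !(Hs I2 I1); ring).
  set (e := fun (a : idx) => match a with I0 => T | I1 => N | I2 => B end).
  set (A := fun (a i : idx) => sum3 (fun k => e a k * g k i)).
  set (M := fun (k a : idx) => e a k).
  set (d := det3 M).
  set (adj := fun (a i : idx) => cof3 M i a).
  set (O := fun (a b : idx) => ip g (e a) (e b) - (if idx_eqb a b then 1 else 0)).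
  assert (HO : forall a b, O a b = 0).
  { intros [| |] [| |]; unfold O, e; simpl; lra. }
  assert (Hdet : det3 (fun a b => ip g (e a) (e b)) = det3 A * d).
  { unfold d, det3, cof3, A, M, e, ip, sum3; simpl. ring. }
  assert (Hd : d <> 0).
  { intros Hd0. assert (H1 : det3 (fun a b => ip g (e a) (e b)) = 1).
    { unfold det3, cof3, sum3, e; simpl. rewrite HTT, HNN, HBB, HTN, HTB, HNB, HNT, HBT, HBN. ring. }
    rewrite Hdet, Hd0 in H1. lra. }
  assert (HE : forall k i, d * (sum3 (fun a => M k a * A a i) - (if idx_eqb k i then 1 else 0))
                = sum3 (fun a => sum3 (fun b => M k a * O a b * adj b i))).
  { intros [| |] [| |]; unfold O, adj, d, det3, cof3, M, A, e, ip, sum3; simpl; ring. }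
  assert (HE0 : forall k i, M k I0 * A I0 i + M k I1 * A I1 i + M k I2 * A I2 i = if idx_eqb k i then 1 else 0).
  { intros k i. specialize (HE k i). unfold sum3 in HE. rewrite !HO in HE.
    assert (H0 : d * (M k I0 * A I0 i + M k I1 * A I1 i + M k I2 * A I2 i - (if idx_eqb k i then 1 else 0)) = 0)
      by (rewrite HE; ring).
    destruct (Rmult_integral _ _ H0) as [H1|H1]; [contradiction|lra]. }
  assert (Hfin : ip g X Y - (ip g X T * ip g Y T + ip g X N * ip g Y N + ip g X B * ip g Y B)
     = - sum3 (fun i => sum3 (fun j => sum3 (fun k => X i * Y j * g k j *
          (sum3 (fun a => M k a * A a i) - (if idx_eqb k i then 1 else 0)))))).
  { unfold M, A, e, ip, sum3; simpl. rewrite !(Hs I1 I0), !(Hs I2 I0), !(Hs I2 I1). ring. }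
  unfold sum3 in Hfin. rewrite !HE0 in Hfin. simpl in Hfin. lra.
Qed.

Record Hyp (a b : R) (s0 s1 : Rbar) (gam : R -> pt) (kappa : R -> R) (N B : R -> pt) : Prop := mkHyp {
  h_lam : forall s, in_open_int s0 s1 s -> 0 < lam a (gam s);
  h_sm : forall s, in_open_int s0 s1 s -> forall (i : idx) (n : nat), ex_derive_n (fun t => gam t i) n s;
  h_unit : forall s, in_open_int s0 s1 s -> inner a b (gam s) (vel gam s) (vel gam s) = 1;
  h_tri : triharmonic a b gam (in_open_int s0 s1);
  h_NB : forall s, in_open_int s0 s1 s -> forall i : idx,
       ex_derive (fun t => N t i) s /\ ex_derive (fun t => B t i) s;
  h_orth : forall s, in_open_int s0 s1 s ->
       inner a b (gam s) (N s) (N s) = 1 /\ inner a b (gam s) (B s) (B s) = 1 /\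
       inner a b (gam s) (vel gam s) (N s) = 0 /\
       inner a b (gam s) (vel gam s) (B s) = 0 /\
       inner a b (gam s) (N s) (B s) = 0;
  h_kpos : forall s, in_open_int s0 s1 s -> 0 < kappa s;
  h_fr : forall s, in_open_int s0 s1 s -> forall k : idx,
       cov a b gam (vel gam) s k = kappa s * N s k /\
       cov a b gam N s k = - kappa s * vel gam s k /\
       cov a b gam B s k = 0 }.

Lemma Jo (s0 s1 : Rbar) : Jopen (in_open_int s0 s1).
Proof. intros t Ht. apply J_open. exact Ht. Qed.

Ltac nzJ H := intros ?t ?Ht; first
  [ lra
  | let Hl := fresh in pose proof (h_lam _ _ _ _ _ _ _ _ H _ ltac:(eassumption)) as Hl;
    unfold lam in Hl; simpl in Hl; first [ lra | apply pow_nonzero; lra ] ].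




Lemma Sm_gam a b s0 s1 gam kappa N B (H : Hyp a b s0 s1 gam kappa N B) (i : idx) :
  Sm (in_open_int s0 s1) (fun t => gam t i).
Proof. apply Sm_of_exn. intros t Ht n. apply (h_sm _ _ _ _ _ _ _ _ H); auto. Qed.

Lemma Sm_vel a b s0 s1 gam kappa N B (H : Hyp a b s0 s1 gam kappa N B) (i : idx) :
  Sm (in_open_int s0 s1) (fun t => vel gam t i).
Proof. change (Sm (in_open_int s0 s1) (Derive (fun t => gam t i))). apply Sm_D. eapply Sm_gam; eauto. Qed.

Lemma Sm_GS a b s0 s1 gam kappa N B (H : Hyp a b s0 s1 gam kappa N B) (k i j : idx) :
  Sm (in_open_int s0 s1) (fun t => GS a b (gam t) k i j).
Proof.
  pose proof (Jo s0 s1) as J0.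
  pose proof (Sm_gam _ _ _ _ _ _ _ _ H I0) as G0.
  pose proof (Sm_gam _ _ _ _ _ _ _ _ H I1) as G1.
  destruct k, i, j; unfold GS, lam; cbv zeta; smt J0; nzJ H.
Qed.

Lemma Sm_met a b s0 s1 gam kappa N B (H : Hyp a b s0 s1 gam kappa N B) (i j : idx) :
  Sm (in_open_int s0 s1) (fun t => bcv_metric a b (gam t) i j).
Proof.
  pose proof (Jo s0 s1) as J0.
  pose proof (Sm_gam _ _ _ _ _ _ _ _ H I0) as G0.
  pose proof (Sm_gam _ _ _ _ _ _ _ _ H I1) as G1.
  destruct i, j; unfold bcv_metric, lam; cbv zeta; smt J0; nzJ H.
Qed.

Lemma Sm_cov a b s0 s1 gam kappa N B (H : Hyp a b s0 s1 gam kappa N B) (V : R -> pt) :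
  (forall k, Sm (in_open_int s0 s1) (fun t => V t k)) ->
  forall k, Sm (in_open_int s0 s1) (fun t => cov a b gam V t k).
Proof.
  intros HV k. pose proof (Jo s0 s1) as J0.
  apply (Sm_ext _ J0 (fun t => Derive (fun u => V u k) t
      + sum3 (fun i => sum3 (fun j => GS a b (gam t) k i j * vel gam t i * V t j)))).
  { intros t Ht. pose proof (h_lam _ _ _ _ _ _ _ _ H t Ht).
    assert (lam a (gam t) <> 0) by lra.
    unfold cov, sum3. rewrite !Gamma_eq by auto. reflexivity. }
  pose proof (fun i => Sm_vel _ _ _ _ _ _ _ _ H i) as Hv.
  pose proof (fun k i j => Sm_GS _ _ _ _ _ _ _ _ H k i j) as Hg.
  unfold sum3. smtl J0 ltac:(first [apply Hv | apply Hg | apply HV | apply Sm_D; apply HV]).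
Qed.

Lemma Sm_inner a b s0 s1 gam kappa N B (H : Hyp a b s0 s1 gam kappa N B) (V W : R -> pt) :
  (forall k, Sm (in_open_int s0 s1) (fun t => V t k)) ->
  (forall k, Sm (in_open_int s0 s1) (fun t => W t k)) ->
  Sm (in_open_int s0 s1) (fun t => inner a b (gam t) (V t) (W t)).
Proof.
  intros HV HW. pose proof (Jo s0 s1) as J0.
  pose proof (fun i j => Sm_met _ _ _ _ _ _ _ _ H i j) as Hm.
  unfold inner, sum3. smtl J0 ltac:(first [apply Hm | apply HV | apply HW]).
Qed.

Lemma kappa_sq a b s0 s1 gam kappa N B (H : Hyp a b s0 s1 gam kappa N B) (t : R) :
  in_open_int s0 s1 t ->
  inner a b (gam t) (cov a b gam (vel gam) t) (cov a b gam (vel gam) t) = kappa t ^ 2.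
Proof.
  intros Ht.
  assert (E : inner a b (gam t) (cov a b gam (vel gam) t) (cov a b gam (vel gam) t)
     = kappa t ^ 2 * inner a b (gam t) (N t) (N t)).
  { unfold inner, sum3. rewrite !(fun k => proj1 (h_fr _ _ _ _ _ _ _ _ H t Ht k)). ring. }
  rewrite E. rewrite (proj1 (h_orth _ _ _ _ _ _ _ _ H t Ht)). ring.
Qed.

Lemma kappa_eq a b s0 s1 gam kappa N B (H : Hyp a b s0 s1 gam kappa N B) (t : R) :
  in_open_int s0 s1 t ->
  kappa t = sqrt (inner a b (gam t) (cov a b gam (vel gam) t) (cov a b gam (vel gam) t)).
Proof.
  intros Ht. rewrite (kappa_sq _ _ _ _ _ _ _ _ H t Ht). rewrite sqrt_pow2; auto.
  pose proof (h_kpos _ _ _ _ _ _ _ _ H t Ht). lra.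
Qed.

Lemma Sm_kappa a b s0 s1 gam kappa N B (H : Hyp a b s0 s1 gam kappa N B) :
  Sm (in_open_int s0 s1) kappa.
Proof.
  pose proof (Jo s0 s1) as J0.
  apply (Sm_ext _ J0 (fun t => sqrt (inner a b (gam t) (cov a b gam (vel gam) t) (cov a b gam (vel gam) t)))).
  { intros t Ht. symmetry. eapply kappa_eq; eauto. }
  apply (Sm_sqrt _ J0).
  - apply (Sm_inner _ _ _ _ _ _ _ _ H); apply (Sm_cov _ _ _ _ _ _ _ _ H); apply (Sm_vel _ _ _ _ _ _ _ _ H).
  - intros t Ht. rewrite (kappa_sq _ _ _ _ _ _ _ _ H t Ht).
    pose proof (h_kpos _ _ _ _ _ _ _ _ H t Ht). nra.
Qed.

Lemma Sm_N a b s0 s1 gam kappa N B (H : Hyp a b s0 s1 gam kappa N B) (k : idx) :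
  Sm (in_open_int s0 s1) (fun t => N t k).
Proof.
  pose proof (Jo s0 s1) as J0.
  apply (Sm_ext _ J0 (fun t => cov a b gam (vel gam) t k / kappa t)).
  { intros t Ht. rewrite (proj1 (h_fr _ _ _ _ _ _ _ _ H t Ht k)).
    pose proof (h_kpos _ _ _ _ _ _ _ _ H t Ht). field. lra. }
  apply (Sm_div _ J0).
  - apply (Sm_cov _ _ _ _ _ _ _ _ H). apply (Sm_vel _ _ _ _ _ _ _ _ H).
  - eapply Sm_kappa; eauto.
  - intros t Ht. pose proof (h_kpos _ _ _ _ _ _ _ _ H t Ht). lra.
Qed.

Definition Dk (kappa : R -> R) (j : nat) (t : R) : R := Derive_n kappa j t.

Definition al (kappa : R -> R) (n : nat) (t : R) : R :=
  let k := kappa t in let d1 := Derive_n kappa 1 t in let d2 := Derive_n kappa 2 t in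
  let d3 := Derive_n kappa 3 t in
  match n with
  | 2 => - k^2
  | 3 => -3 * k * d1
  | 4 => -3 * d1^2 - 4 * k * d2 + k^4
  | 5 => -10 * d1 * d2 - 5 * k * d3 + 10 * k^3 * d1
  | _ => 0
  end.

Definition be (kappa : R -> R) (n : nat) (t : R) : R :=
  let k := kappa t in let d1 := Derive_n kappa 1 t in let d2 := Derive_n kappa 2 t in
  let d3 := Derive_n kappa 3 t in let d4 := Derive_n kappa 4 t in
  match n with
  | 1 => k
  | 2 => d1
  | 3 => d2 - k^3
  | 4 => d3 - 6 * k^2 * d1
  | 5 => d4 - 15 * k * d1^2 - 10 * k^2 * d2 + k^5
  | _ => 0
  end.

Lemma covT_step a b s0 s1 gam kappa N B (H : Hyp a b s0 s1 gam kappa N B) (n : nat)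
  (A Bf dA dB : R -> R) :
  (forall t, in_open_int s0 s1 t -> forall k, covT a b gam n t k = A t * vel gam t k + Bf t * N t k) ->
  (forall t, in_open_int s0 s1 t -> is_derive A t (dA t)) ->
  (forall t, in_open_int s0 s1 t -> is_derive Bf t (dB t)) ->
  forall t, in_open_int s0 s1 t -> forall k,
    covT a b gam (S n) t k = (dA t - kappa t * Bf t) * vel gam t k + (dB t + kappa t * A t) * N t k.
Proof.
  intros Hn HA HB t Ht k. simpl.
  rewrite (cov_comb a b gam (covT a b gam n) (vel gam) N A Bf (dA t) (dB t) t); auto.
  - rewrite (proj1 (h_fr _ _ _ _ _ _ _ _ H t Ht k)), (proj1 (proj2 (h_fr _ _ _ _ _ _ _ _ H t Ht k))). ring.
  - generalize (Jo s0 s1 t Ht). apply filter_imp. intros u Hu. apply Hn. exact Hu.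
  - intros i. apply (Sm_ex _ _ t (Sm_vel _ _ _ _ _ _ _ _ H i) Ht).
  - intros i. apply (h_NB _ _ _ _ _ _ _ _ H t Ht i).
Qed.

Ltac fixD kappa t :=
  try change (Derive (fun x => kappa x) t) with (Derive_n kappa 1 t) in *;
  try change (Derive (fun x => Derive_n kappa 1 x) t) with (Derive_n kappa 2 t) in *;
  try change (Derive (fun x => Derive_n kappa 2 x) t) with (Derive_n kappa 3 t) in *;
  try change (Derive (fun x => Derive_n kappa 3 x) t) with (Derive_n kappa 4 t) in *;
  try change (Derive (fun x => Derive (fun x0 => Derive (fun x1 => Derive (fun x2 => kappa x2) x1) x0) x) t) with (Derive_n kappa 4 t) in *;
  try change (Derive (fun x => Derive (fun x0 => Derive (fun x1 => kappa x1) x0) x) t) with (Derive_n kappa 3 t) in *;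
  try change (Derive (fun x => Derive (fun x0 => kappa x0) x) t) with (Derive_n kappa 2 t) in *.

Lemma exD a b s0 s1 gam kappa N B (H : Hyp a b s0 s1 gam kappa N B) (j : nat) (t : R) :
  in_open_int s0 s1 t -> ex_derive (fun x => Derive_n kappa j x) t.
Proof.
  intros Ht. apply (Sm_ex (in_open_int s0 s1)); auto. apply Sm_Dn. eapply Sm_kappa; eauto.
Qed.

Ltac derD H :=
  intros ?t ?Ht; unfold al, be; cbv beta zeta iota; auto_derive;
  [ repeat split; try exact I;
    first [ apply (exD _ _ _ _ _ _ _ _ H 0%nat); assumption
          | apply (exD _ _ _ _ _ _ _ _ H 1%nat); assumption
          | apply (exD _ _ _ _ _ _ _ _ H 2%nat); assumption
          | apply (exD _ _ _ _ _ _ _ _ H 3%nat); assumption ]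
  | idtac ].

Lemma covT_dec a b s0 s1 gam kappa N B (H : Hyp a b s0 s1 gam kappa N B) :
  forall t, in_open_int s0 s1 t -> forall k,
    covT a b gam 1 t k = al kappa 1 t * vel gam t k + be kappa 1 t * N t k /\
    covT a b gam 2 t k = al kappa 2 t * vel gam t k + be kappa 2 t * N t k /\
    covT a b gam 3 t k = al kappa 3 t * vel gam t k + be kappa 3 t * N t k /\
    covT a b gam 5 t k = al kappa 5 t * vel gam t k + be kappa 5 t * N t k.
Proof.
  assert (H1 : forall t, in_open_int s0 s1 t -> forall k,
    covT a b gam 1 t k = al kappa 1 t * vel gam t k + be kappa 1 t * N t k).
  { intros t Ht k. simpl. rewrite (proj1 (h_fr _ _ _ _ _ _ _ _ H t Ht k)). unfold al, be. ring. }
  assert (H2 : forall t, in_open_int s0 s1 t -> forall k,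
    covT a b gam 2 t k = al kappa 2 t * vel gam t k + be kappa 2 t * N t k).
  { intros t Ht k. rewrite (covT_step a b s0 s1 gam kappa N B H 1 (al kappa 1) (be kappa 1)
       (fun _ => 0) (Derive_n kappa 1) H1); auto.
    - unfold al, be. cbv zeta. ring.
    - intros u Hu. unfold al. cbv zeta. auto_derive; auto.
    - intros u Hu. unfold be. apply Derive_correct. apply (exD _ _ _ _ _ _ _ _ H 0%nat); auto. }
  assert (H3 : forall t, in_open_int s0 s1 t -> forall k,
    covT a b gam 3 t k = al kappa 3 t * vel gam t k + be kappa 3 t * N t k).
  { intros t Ht k. rewrite (covT_step a b s0 s1 gam kappa N B H 2 (al kappa 2) (be kappa 2)
       (fun t => -2 * kappa t * Derive_n kappa 1 t) (Derive_n kappa 2) H2); auto.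
    - unfold al, be. cbv beta zeta iota. ring.
    - derD H. fixD kappa t0. ring.
    - derD H. fixD kappa t0. ring. }
  assert (H4 : forall t, in_open_int s0 s1 t -> forall k,
    covT a b gam 4 t k = al kappa 4 t * vel gam t k + be kappa 4 t * N t k).
  { intros t Ht k. rewrite (covT_step a b s0 s1 gam kappa N B H 3 (al kappa 3) (be kappa 3)
       (fun t => -3 * Derive_n kappa 1 t ^ 2 - 3 * kappa t * Derive_n kappa 2 t)
       (fun t => Derive_n kappa 3 t - 3 * kappa t ^ 2 * Derive_n kappa 1 t) H3); auto.
    - unfold al, be. cbv beta zeta iota. ring.
    - derD H. fixD kappa t0. ring.
    - derD H. fixD kappa t0. ring. }
  assert (H5 : forall t, in_open_int s0 s1 t -> forall k,
    covT a b gam 5 t k = al kappa 5 t * vel gam t k + be kappa 5 t * N t k).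
  { intros t Ht k. rewrite (covT_step a b s0 s1 gam kappa N B H 4 (al kappa 4) (be kappa 4)
       (fun t => -6 * Derive_n kappa 1 t * Derive_n kappa 2 t - 4 * Derive_n kappa 1 t * Derive_n kappa 2 t
                 - 4 * kappa t * Derive_n kappa 3 t + 4 * kappa t ^ 3 * Derive_n kappa 1 t)
       (fun t => Derive_n kappa 4 t - 12 * kappa t * Derive_n kappa 1 t ^ 2 - 6 * kappa t ^ 2 * Derive_n kappa 2 t) H4); auto.
    - unfold al, be. cbv beta zeta iota. ring.
    - derD H. fixD kappa t0. ring.
    - derD H. fixD kappa t0. ring. }
  intros t Ht k. repeat split; auto.
Qed.

Lemma inner_pm (a b : R) (p : pt) (A B C V : pt) :
  inner a b p (fun l => A l + B l - C l) V = inner a b p A V + inner a b p B V - inner a b p C V.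
Proof. unfold inner, sum3. ring. Qed.

Lemma inner_zero (a b : R) (p : pt) (V : pt) : inner a b p (fun _ => 0) V = 0.
Proof. unfold inner, sum3. ring. Qed.

Lemma tri_eqs a b s0 s1 gam kappa N B (H : Hyp a b s0 s1 gam kappa N B) (t : R) :
  in_open_int s0 s1 t ->
  al kappa 5 t = 0 /\
  be kappa 5 t + (Derive_n kappa 2 t - 2 * kappa t ^ 3) *
     (c1 a b - c2 a b * ((inner a b (gam t) (vel gam t) ez)^2 + (inner a b (gam t) (N t) ez)^2)) = 0 /\
  (Derive_n kappa 2 t - 2 * kappa t ^ 3) * c2 a b * inner a b (gam t) (N t) ez * inner a b (gam t) (B t) ez = 0.
Proof.
  intros Ht.
  pose proof (h_tri _ _ _ _ _ _ _ _ H t Ht) as HT.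
  pose proof (h_lam _ _ _ _ _ _ _ _ H t Ht) as HL.
  pose proof (h_unit _ _ _ _ _ _ _ _ H t Ht) as HTT.
  destruct (h_orth _ _ _ _ _ _ _ _ H t Ht) as [HNN [HBB [HTN [HTB HNB]]]].
  pose proof (covT_dec _ _ _ _ _ _ _ _ H t Ht) as Hd.
  assert (E1 : covT a b gam 1 t = fun l => al kappa 1 t * vel gam t l + be kappa 1 t * N t l)
    by (apply functional_extensionality; intros l; apply (Hd l)).
  assert (E2 : covT a b gam 2 t = fun l => al kappa 2 t * vel gam t l + be kappa 2 t * N t l)
    by (apply functional_extensionality; intros l; apply (Hd l)).
  assert (E3 : covT a b gam 3 t = fun l => al kappa 3 t * vel gam t l + be kappa 3 t * N t l)
    by (apply functional_extensionality; intros l; apply (Hd l)).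
  assert (E5 : covT a b gam 5 t = fun l => al kappa 5 t * vel gam t l + be kappa 5 t * N t l)
    by (apply functional_extensionality; intros l; apply (Hd l)).
  assert (HV : forall V, inner a b (gam t) (covT a b gam 5 t) V
      + inner a b (gam t) (Rop a b (gam t) (covT a b gam 3 t) (vel gam t) (vel gam t)) V
      - inner a b (gam t) (Rop a b (gam t) (covT a b gam 2 t) (covT a b gam 1 t) (vel gam t)) V = 0).
  { intros V. rewrite <- inner_pm. rewrite <- (inner_zero a b (gam t) V). apply inner_ext. exact HT. }
  set (p := gam t) in *. set (T := vel gam t) in *. set (Nt := N t) in *. set (Bt := B t) in *.
  assert (HNT : inner a b p Nt T = 0) by (rewrite inner_sym; auto).
  assert (HBT : inner a b p Bt T = 0) by (rewrite inner_sym; auto).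
  assert (HBN : inner a b p Bt Nt = 0) by (rewrite inner_sym; auto).
  assert (HzT : inner a b p ez T = inner a b p T ez) by (apply inner_sym).
  assert (HzN : inner a b p ez Nt = inner a b p Nt ez) by (apply inner_sym).
  assert (HzB : inner a b p ez Bt = inner a b p Bt ez) by (apply inner_sym).
  assert (Hk1 : al kappa 1 t = 0) by reflexivity.
  pose proof (HV T) as VT. pose proof (HV Nt) as VN. pose proof (HV Bt) as VB. clear HV.
  rewrite !inner_Rop in VT, VN, VB by auto.
  rewrite E1, E2, E3, E5 in VT, VN, VB.
  repeat rewrite inner_comb2 in VT. repeat rewrite inner_comb2 in VN. repeat rewrite inner_comb2 in VB.
  rewrite ?HTT, ?HNN, ?HBB, ?HTN, ?HTB, ?HNB, ?HNT, ?HBT, ?HBN, ?HzT, ?HzN, ?HzB, ?Hk1 in VT.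
  rewrite ?HTT, ?HNN, ?HBB, ?HTN, ?HTB, ?HNB, ?HNT, ?HBT, ?HBN, ?HzT, ?HzN, ?HzB, ?Hk1 in VN.
  rewrite ?HTT, ?HNN, ?HBB, ?HTN, ?HTB, ?HNB, ?HNT, ?HBT, ?HBN, ?HzT, ?HzN, ?HzB, ?Hk1 in VB.
  split; [|split].
  - rewrite <- VT. unfold al, be; cbv beta zeta iota. ring.
  - rewrite <- VN. unfold al, be; cbv beta zeta iota. ring.
  - enough (E : - ((Derive_n kappa 2 t - 2 * kappa t ^ 3) * c2 a b * inner a b p Nt ez * inner a b p Bt ez) = 0) by lra.
    rewrite <- VB. unfold al, be; cbv beta zeta iota. ring.
Qed.

Lemma deriv_loc_zero (f : R -> R) (u d : R) :
  locally u (fun v => f v = 0) -> is_derive f u d -> d = 0.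
Proof.
  intros Hl Hd.
  assert (H0 : is_derive f u 0).
  { apply (is_derive_ext_loc (fun _ => 0) f u 0).
    - generalize Hl. apply filter_imp. intros v Hv. auto.
    - apply (is_derive_const (K:=R_AbsRing) (V:=R_NormedModule)). }
  rewrite <- (is_derive_unique _ _ _ Hd). apply is_derive_unique. exact H0.
Qed.

Definition convex (U : R -> Prop) : Prop := forall x y z, U x -> U y -> x <= z <= y -> U z.

Lemma const_conv (U : R -> Prop) (f : R -> R) : convex U ->
  (forall u, U u -> is_derive f u 0) -> forall x y, U x -> U y -> f x = f y.
Proof.
  intros Hc Hd x y Hx Hy.
  assert (Hm : forall z, Rmin x y <= z <= Rmax x y -> U z).
  { intros z Hz. unfold Rmin, Rmax in Hz. destruct (Rle_dec x y).
    - apply (Hc x y z); auto.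
    - apply (Hc y x z); auto; lra. }
  destruct (MVT_gen f x y (fun _ => 0)) as [c [Hc1 Hc2]].
  - intros z Hz. apply Hd. apply Hm. lra.
  - intros z Hz. apply continuity_pt_filterlim.
    apply (ex_derive_continuous (K:=R_AbsRing) (V:=R_NormedModule)).
    exists 0. apply Hd. apply Hm. auto.
  - lra.
Qed.

Lemma loc_neq_ex (f : R -> R) (u : R) : ex_derive f u -> f u <> 0 ->
  locally u (fun v => f v <> 0).
Proof.
  intros Hd Hn. apply cont_neq; auto.
  apply (ex_derive_continuous (K:=R_AbsRing) (V:=R_NormedModule)). exact Hd.
Qed.

Definition Ival (s e u : R) : Prop := s - e < u < s + e.

Lemma Ival_open (s e u : R) : Ival s e u -> locally u (Ival s e).
Proof.
  intros [H1 H2].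
  assert (Hp : 0 < Rmin (u - (s - e)) (s + e - u)) by (apply Rmin_glb_lt; lra).
  exists (mkposreal _ Hp). intros v Hv. change (Rabs (v - u) < Rmin (u - (s - e)) (s + e - u)) in Hv.
  pose proof (Rmin_l (u - (s - e)) (s + e - u)). pose proof (Rmin_r (u - (s - e)) (s + e - u)).
  apply Rabs_def2 in Hv. unfold Ival. lra.
Qed.

Lemma Ival_convex (s e : R) : convex (Ival s e).
Proof. intros x y z [Hx1 Hx2] [Hy1 Hy2] Hz. unfold Ival. lra. Qed.

Lemma loc_Ival (P : R -> Prop) (s : R) : locally s P -> exists e, 0 < e /\ forall u, Ival s e u -> P u.
Proof.
  intros [eps H]. exists eps. split. apply cond_pos.
  intros u [H1 H2]. apply H. change (Rabs (u - s) < eps). apply Rabs_def1; lra.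
Qed.

Lemma dstep (U : R -> Prop) (w dw p dp : R -> R) :
  (forall u, U u -> locally u U) ->
  (forall u, U u -> is_derive w u (dw u)) -> (forall u, U u -> dw u <> 0) ->
  (forall x, is_derive p x (dp x)) ->
  (forall u, U u -> p (w u) = 0) -> forall u, U u -> dp (w u) = 0.
Proof.
  intros Uo Hw Hdw Hp H0 u Hu.
  assert (D : is_derive (fun v => p (w v)) u (dw u * dp (w u))).
  { apply (is_derive_comp p w u (dp (w u)) (dw u)); auto. }
  assert (Z : dw u * dp (w u) = 0).
  { apply (deriv_loc_zero (fun v => p (w v)) u); auto.
    generalize (Uo u Hu). apply filter_imp. auto. }
  destruct (Rmult_integral _ _ Z) as [Z1|Z1]; auto. exfalso. apply (Hdw u Hu Z1).
Qed.

Lemma inner_scal (a b : R) (p : pt) (x : R) (X V : pt) :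
  inner a b p (fun l => x * X l) V = x * inner a b p X V.
Proof. unfold inner, sum3. ring. Qed.

Lemma ex_gam a b s0 s1 gam kappa N B (H : Hyp a b s0 s1 gam kappa N B) (t : R) :
  in_open_int s0 s1 t -> forall k, ex_derive (fun u => gam u k) t.
Proof. intros Ht k. exact (h_sm _ _ _ _ _ _ _ _ H t Ht k 1%nat). Qed.

Lemma eta_deriv a b s0 s1 gam kappa N B (H : Hyp a b s0 s1 gam kappa N B) (V : R -> pt) (t : R) :
  in_open_int s0 s1 t -> (forall k, ex_derive (fun u => V u k) t) ->
  is_derive (fun u => inner a b (gam u) (V u) ez) t
    (inner a b (gam t) (cov a b gam V t) ez + inner a b (gam t) (V t) (Wv a b (gam t) (vel gam t))).
Proof.
  intros Ht HV.
  pose proof (inner_deriv a b gam V (fun _ => ez) t (h_lam _ _ _ _ _ _ _ _ H t Ht)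
     (ex_gam _ _ _ _ _ _ _ _ H t Ht) HV
     ltac:(intros k; exact (ex_derive_const (K:=R_AbsRing) (V:=R_NormedModule) (ez k) t))) as D.
  replace (inner a b (gam t) (V t) (Wv a b (gam t) (vel gam t)))
    with (inner a b (gam t) (V t) (cov a b gam (fun _ => ez) t)).
  exact D.
  rewrite (inner_sym a b (gam t) (V t)), (inner_sym a b (gam t) (V t)).
  apply inner_ext. intros l. unfold cov, Wv. rewrite Derive_const. ring.
Qed.

Lemma dT a b s0 s1 gam kappa N B (H : Hyp a b s0 s1 gam kappa N B) (t : R) :
  in_open_int s0 s1 t ->
  is_derive (fun u => inner a b (gam u) (vel gam u) ez) t (kappa t * inner a b (gam t) (N t) ez).
Proof.
  intros Ht. pose proof (h_lam _ _ _ _ _ _ _ _ H t Ht).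
  replace (kappa t * inner a b (gam t) (N t) ez) with
    (inner a b (gam t) (cov a b gam (vel gam) t) ez + inner a b (gam t) (vel gam t) (Wv a b (gam t) (vel gam t))).
  apply (eta_deriv _ _ _ _ _ _ _ _ H); auto.
  intros k. apply (Sm_ex _ _ t (Sm_vel _ _ _ _ _ _ _ _ H k) Ht).
  rewrite W1 by lra. rewrite <- inner_scal. rewrite Rplus_0_r. apply inner_ext.
  intros l. apply (h_fr _ _ _ _ _ _ _ _ H t Ht).
Qed.

Lemma dN a b s0 s1 gam kappa N B (H : Hyp a b s0 s1 gam kappa N B) (t : R) :
  in_open_int s0 s1 t ->
  is_derive (fun u => inner a b (gam u) (N u) ez) t
    (- kappa t * inner a b (gam t) (vel gam t) ez + inner a b (gam t) (N t) (Wv a b (gam t) (vel gam t))).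
Proof.
  intros Ht.
  replace (- kappa t * inner a b (gam t) (vel gam t) ez) with (inner a b (gam t) (cov a b gam N t) ez).
  apply (eta_deriv _ _ _ _ _ _ _ _ H); auto.
  intros k. exact (proj1 (h_NB _ _ _ _ _ _ _ _ H t Ht k)).
  rewrite <- inner_scal. apply inner_ext.
  intros l. apply (h_fr _ _ _ _ _ _ _ _ H t Ht).
Qed.

Lemma dB a b s0 s1 gam kappa N B (H : Hyp a b s0 s1 gam kappa N B) (t : R) :
  in_open_int s0 s1 t ->
  is_derive (fun u => inner a b (gam u) (B u) ez) t
    (inner a b (gam t) (B t) (Wv a b (gam t) (vel gam t))).
Proof.
  intros Ht.
  replace (inner a b (gam t) (B t) (Wv a b (gam t) (vel gam t))) with
    (inner a b (gam t) (cov a b gam B t) ez + inner a b (gam t) (B t) (Wv a b (gam t) (vel gam t))).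
  apply (eta_deriv _ _ _ _ _ _ _ _ H); auto.
  intros k. exact (proj2 (h_NB _ _ _ _ _ _ _ _ H t Ht k)).
  rewrite (inner_ext a b (gam t) (cov a b gam B t) (fun _ => 0)). rewrite inner_zero. ring.
  intros l. apply (h_fr _ _ _ _ _ _ _ _ H t Ht).
Qed.

Lemma pars a b s0 s1 gam kappa N B (H : Hyp a b s0 s1 gam kappa N B) (t : R) (X Y : pt) :
  in_open_int s0 s1 t ->
  inner a b (gam t) X Y = inner a b (gam t) X (vel gam t) * inner a b (gam t) Y (vel gam t)
    + inner a b (gam t) X (N t) * inner a b (gam t) Y (N t)
    + inner a b (gam t) X (B t) * inner a b (gam t) Y (B t).
Proof.
  intros Ht. destruct (h_orth _ _ _ _ _ _ _ _ H t Ht) as [HNN [HBB [HTN [HTB HNB]]]].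
  pose proof (h_unit _ _ _ _ _ _ _ _ H t Ht) as HTT.
  apply (parseval_gen (bcv_metric a b (gam t))); auto.
  intros; apply met_sym.
Qed.

Lemma frame_facts a b s0 s1 gam kappa N B (H : Hyp a b s0 s1 gam kappa N B) (t : R) :
  in_open_int s0 s1 t ->
  (inner a b (gam t) (vel gam t) ez)^2 + (inner a b (gam t) (N t) ez)^2 + (inner a b (gam t) (B t) ez)^2 = 1 /\
  inner a b (gam t) (N t) (Wv a b (gam t) (vel gam t)) * inner a b (gam t) (N t) ez
   + inner a b (gam t) (B t) (Wv a b (gam t) (vel gam t)) * inner a b (gam t) (B t) ez = 0 /\
  (inner a b (gam t) (N t) (Wv a b (gam t) (vel gam t)))^2 + (inner a b (gam t) (B t) (Wv a b (gam t) (vel gam t)))^2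
   = b^2/4 * (1 - (inner a b (gam t) (vel gam t) ez)^2).
Proof.
  intros Ht.
  pose proof (h_lam _ _ _ _ _ _ _ _ H t Ht) as HL.
  pose proof (h_unit _ _ _ _ _ _ _ _ H t Ht) as HTT.
  assert (HW1 : inner a b (gam t) (vel gam t) (Wv a b (gam t) (vel gam t)) = 0) by (apply W1; lra).
  assert (HW1' : inner a b (gam t) (Wv a b (gam t) (vel gam t)) (vel gam t) = 0) by (rewrite inner_sym; auto).
  assert (HW2 : inner a b (gam t) (Wv a b (gam t) (vel gam t)) ez = 0) by (rewrite inner_sym; apply W2; lra).
  assert (HW3 : inner a b (gam t) (Wv a b (gam t) (vel gam t)) (Wv a b (gam t) (vel gam t))
     = b^2/4 * (1 - (inner a b (gam t) (vel gam t) ez)^2)) by (rewrite W3 by lra; rewrite HTT; ring).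
  pose proof (pars _ _ _ _ _ _ _ _ H t ez ez Ht) as P1.
  pose proof (pars _ _ _ _ _ _ _ _ H t (Wv a b (gam t) (vel gam t)) ez Ht) as P2.
  pose proof (pars _ _ _ _ _ _ _ _ H t (Wv a b (gam t) (vel gam t)) (Wv a b (gam t) (vel gam t)) Ht) as P3.
  rewrite ez_ez in P1. rewrite HW2, HW1' in P2. rewrite HW3, HW1' in P3.
  rewrite (inner_sym a b (gam t) ez (vel gam t)), (inner_sym a b (gam t) ez (N t)), (inner_sym a b (gam t) ez (B t)) in P1, P2.
  rewrite (inner_sym a b (gam t) (Wv a b (gam t) (vel gam t)) (N t)), (inner_sym a b (gam t) (Wv a b (gam t) (vel gam t)) (B t)) in P2, P3.
  split; [|split]; nra.
Qed.

Definition Fpol (u p C c : R) : R :=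
  (-7/2)*u^8 + (-3/2)*u^6*c + (-10)*u^4*C + (-7)*u^4*p^2 + u^2*C*c + (-1/2)*u^2*c*p^2
  + (-2)*C^2 + 8*C*p^2 + (-7/2)*p^4.
Definition Hpol (u p C c : R) : R :=
  (-35)*u^8 + (-19/2)*u^6*c + (-46)*u^4*C + (-28)*u^4*p^2 + u^2*C*c + (-1/2)*u^2*c*p^2
  + 16*C^2 + (-22)*C*p^2 + 7*p^4.
Definition Fu (u p C c : R) : R :=
  (-28)*u^7 + (-9)*u^5*c + (-40)*u^3*C + (-28)*u^3*p^2 + 2*u*C*c + (-1)*u*c*p^2.
Definition Fp (u p C c : R) : R :=
  (-14)*u^4*p + (-1)*u^2*c*p + 16*C*p + (-14)*p^3.
Definition Spol (w C c : R) : R :=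
  6174*c*w^5 + (111132*C + 4459/4*c^2)*w^4 + (28224*C*c - 21*c^3)*w^3
  + (158760*C^2 - 2541/4*C*c^2)*w^2 - 6174*C^2*c*w - 15876*C^3.

Lemma Res_id (u p C c : R) :
  let a2 := -7/2 in
  let a1 := (-7)*u^4 + (-1/2)*u^2*c + 8*C in
  let a0 := (-7/2)*u^8 + (-3/2)*u^6*c + (-10)*u^4*C + u^2*C*c + (-2)*C^2 in
  let b2 := 7 in
  let b1 := (-28)*u^4 + (-1/2)*u^2*c + (-22)*C in
  let b0 := (-35)*u^8 + (-19/2)*u^6*c + (-46)*u^4*C + u^2*C*c + 16*C^2 in
  p^2 * (u^4 * Spol (u^2) C c) =
   (a0*b2 - a2*b0) * p^2 * (b2 * Fpol u p C c - a2 * Hpol u p C c)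
   + (a1*b2 - a2*b1) * (b0 * Fpol u p C c - a0 * Hpol u p C c).
Proof. unfold Spol, Fpol, Hpol. cbv zeta. field. Qed.

Lemma G_id (u p q C c : R) :
  p * Hpol u p C c = u * (Fu u p C c * p + Fp u p C c * q)
    + Fp u p C c * (C + u^4/2 - p^2/2 - u*q).
Proof. unfold Hpol, Fu, Fp. field. Qed.

Lemma solve_lin (k r X : R) : k <> 0 -> k * r = X -> r = X / k.
Proof. intros Hk H. rewrite <- H. field. auto. Qed.

Ltac exDs HD u Hu :=
  repeat split; try exact I;
  first [ apply (HD u 0%nat Hu) | apply (HD u 1%nat Hu) | apply (HD u 2%nat Hu) | apply (HD u 3%nat Hu) ].

Lemma elim (kappa : R -> R) (s e c : R) : 0 < e ->
  (forall u, Ival s e u -> 0 < kappa u) ->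
  (forall u, Ival s e u -> Derive_n kappa 1 u <> 0) ->
  (forall u j, Ival s e u -> ex_derive (fun x => Derive_n kappa j x) u) ->
  (forall u, Ival s e u -> al kappa 5 u = 0) ->
  (forall u, Ival s e u -> be kappa 5 u + (Derive_n kappa 2 u - 2 * kappa u ^ 3) * c = 0) ->
  False.
Proof.
  intros He Hk HD1 HD Hal Hbe.
  set (U := Ival s e).
  assert (Uo : forall u, U u -> locally u U) by (intros; apply Ival_open; auto).
  assert (Uc : convex U) by apply Ival_convex.
  assert (Us : U s) by (unfold U, Ival; lra).
  set (Q := fun v => kappa v * Derive_n kappa 2 v + Derive_n kappa 1 v ^ 2 / 2 - kappa v ^ 4 / 2).
  assert (HQ : forall u, U u -> is_derive Q u 0).
  { intros u Hu. pose proof (Hal u Hu) as A. unfold al in A. cbv zeta in A.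
    unfold Q. auto_derive.
    - exDs HD u Hu.
    - fixD kappa u. lra. }
  set (C := Q s).
  assert (HC : forall u, U u -> Q u = C) by (intros u Hu; apply (const_conv U Q Uc HQ); auto).
  assert (HF : forall u, U u -> Fpol (kappa u) (Derive_n kappa 1 u) C c = 0).
  { intros u Hu.
    assert (D5 : is_derive (al kappa 5) u
       (-10 * Derive_n kappa 2 u ^ 2 - 15 * Derive_n kappa 1 u * Derive_n kappa 3 u
        - 5 * kappa u * Derive_n kappa 4 u + 30 * kappa u ^ 2 * Derive_n kappa 1 u ^ 2
        + 10 * kappa u ^ 3 * Derive_n kappa 2 u)).
    { unfold al. cbv beta zeta iota. auto_derive.
      - exDs HD u Hu.
      - fixD kappa u. ring. }
    pose proof (deriv_loc_zero (al kappa 5) u _ ltac:(generalize (Uo u Hu); apply filter_imp; intros v Hv; apply Hal; exact Hv) D5) as A'.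
    pose proof (Hal u Hu) as A. unfold al in A. cbv zeta in A.
    pose proof (Hbe u Hu) as NN. unfold be in NN. cbv zeta in NN.
    pose proof (HC u Hu) as Qe. unfold Q in Qe.
    pose proof (Hk u Hu) as kp.
    set (k := kappa u) in *. set (p := Derive_n kappa 1 u) in *. set (q := Derive_n kappa 2 u) in *.
    set (r := Derive_n kappa 3 u) in *. set (s4 := Derive_n kappa 4 u) in *.
    assert (Hr : r = (-10*p*q + 10*k^3*p) / (5*k)) by (apply solve_lin; lra).
    assert (Hs : s4 = (-10*q^2 - 15*p*r + 30*k^2*p^2 + 10*k^3*q) / (5*k)) by (apply solve_lin; lra).
    assert (Hq : q = (C - p^2/2 + k^4/2) / k) by (apply solve_lin; lra).
    assert (E : Fpol k p C c = k^3 * (s4 - 15 * k * p ^ 2 - 10 * k ^ 2 * q + k ^ 5 + (q - 2 * k ^ 3) * c)).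
    { rewrite Hs. rewrite Hr. rewrite Hq. unfold Fpol. field. lra. }
    rewrite E. rewrite NN. ring. }
  assert (HH : forall u, U u -> Hpol (kappa u) (Derive_n kappa 1 u) C c = 0).
  { intros u Hu.
    assert (DF : is_derive (fun v => Fpol (kappa v) (Derive_n kappa 1 v) C c) u
       (Fu (kappa u) (Derive_n kappa 1 u) C c * Derive_n kappa 1 u
        + Fp (kappa u) (Derive_n kappa 1 u) C c * Derive_n kappa 2 u)).
    { unfold Fpol, Fu, Fp. auto_derive.
      - exDs HD u Hu.
      - fixD kappa u. field. }
    pose proof (deriv_loc_zero _ u _ ltac:(generalize (Uo u Hu); apply filter_imp; intros v Hv; apply HF; exact Hv) DF) as Z.
    pose proof (G_id (kappa u) (Derive_n kappa 1 u) (Derive_n kappa 2 u) C c) as G.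
    pose proof (HC u Hu) as Qe. unfold Q in Qe.
    assert (Z2 : Derive_n kappa 1 u * Hpol (kappa u) (Derive_n kappa 1 u) C c = 0).
    { rewrite G. rewrite Z. replace (C + kappa u ^ 4 / 2 - Derive_n kappa 1 u ^ 2 / 2 - kappa u * Derive_n kappa 2 u) with 0 by lra. ring. }
    destruct (Rmult_integral _ _ Z2) as [Z3|Z3]; auto. exfalso. apply (HD1 u Hu Z3). }
  assert (HS : forall u, U u -> Spol (kappa u ^ 2) C c = 0).
  { intros u Hu. pose proof (Res_id (kappa u) (Derive_n kappa 1 u) C c) as R0. cbv zeta in R0.
    rewrite (HF u Hu), (HH u Hu) in R0.
    assert (R1 : (Derive_n kappa 1 u ^ 2 * kappa u ^ 4) * Spol (kappa u ^ 2) C c = 0) by (rewrite <- Rmult_assoc in R0; lra).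
    destruct (Rmult_integral _ _ R1) as [R2|R2]; auto. exfalso.
    pose proof (HD1 u Hu). pose proof (Hk u Hu).
    apply (Rmult_integral_contrapositive_currified (Derive_n kappa 1 u ^ 2) (kappa u ^ 4)); auto;
      apply pow_nonzero; lra. }
  set (w := fun v => kappa v ^ 2).
  set (dw := fun v => 2 * kappa v * Derive_n kappa 1 v).
  assert (Hw : forall u, U u -> is_derive w u (dw u)).
  { intros u Hu. unfold w, dw. auto_derive. exDs HD u Hu. fixD kappa u. ring. }
  assert (Hdw : forall u, U u -> dw u <> 0).
  { intros u Hu. unfold dw. pose proof (Hk u Hu). pose proof (HD1 u Hu).
    apply Rmult_integral_contrapositive_currified; auto. lra. }
  set (A5 := 6174*c). set (A4 := 111132*C + 4459/4*c^2). set (A3 := 28224*C*c - 21*c^3).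
  set (A2 := 158760*C^2 - 2541/4*C*c^2). set (A1 := - 6174*C^2*c). set (A0 := - 15876*C^3).
  assert (S0 : forall u, U u -> (fun x => A5*x^5 + A4*x^4 + A3*x^3 + A2*x^2 + A1*x + A0) (w u) = 0).
  { intros u Hu. rewrite <- (HS u Hu). unfold Spol, w, A5, A4, A3, A2, A1, A0. simpl. ring. }
  pose proof (dstep U w dw (fun x => A5*x^5 + A4*x^4 + A3*x^3 + A2*x^2 + A1*x + A0) (fun x => 5*A5*x^4 + 4*A4*x^3 + 3*A3*x^2 + 2*A2*x + A1) Uo Hw Hdw
     ltac:(intros x; auto_derive; auto; simpl; ring) S0) as S1.
  pose proof (dstep U w dw (fun x => 5*A5*x^4 + 4*A4*x^3 + 3*A3*x^2 + 2*A2*x + A1) (fun x => 20*A5*x^3 + 12*A4*x^2 + 6*A3*x + 2*A2) Uo Hw Hdw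
     ltac:(intros x; auto_derive; auto; simpl; ring) S1) as S2.
  pose proof (dstep U w dw (fun x => 20*A5*x^3 + 12*A4*x^2 + 6*A3*x + 2*A2) (fun x => 60*A5*x^2 + 24*A4*x + 6*A3) Uo Hw Hdw
     ltac:(intros x; auto_derive; auto; simpl; ring) S2) as S3.
  pose proof (dstep U w dw (fun x => 60*A5*x^2 + 24*A4*x + 6*A3) (fun x => 120*A5*x + 24*A4) Uo Hw Hdw
     ltac:(intros x; auto_derive; auto; simpl; ring) S3) as S4.
  pose proof (dstep U w dw (fun x => 120*A5*x + 24*A4) (fun x => 120*A5) Uo Hw Hdw
     ltac:(intros x; auto_derive; auto; simpl; ring) S4) as S5.
  pose proof (S5 s Us) as c0. simpl in c0. unfold A5 in c0.
  assert (Hc : c = 0) by lra.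
  assert (T0 : forall u, U u -> (fun x => 111132*C*x^4 + 158760*C^2*x^2 - 15876*C^3) (w u) = 0).
  { intros u Hu. rewrite <- (HS u Hu). rewrite Hc. unfold Spol, w. simpl. ring. }
  pose proof (dstep U w dw (fun x => 111132*C*x^4 + 158760*C^2*x^2 - 15876*C^3) (fun x => 4*111132*C*x^3 + 2*158760*C^2*x) Uo Hw Hdw
     ltac:(intros x; auto_derive; auto; simpl; ring) T0) as T1.
  pose proof (dstep U w dw (fun x => 4*111132*C*x^3 + 2*158760*C^2*x) (fun x => 12*111132*C*x^2 + 2*158760*C^2) Uo Hw Hdw
     ltac:(intros x; auto_derive; auto; simpl; ring) T1) as T2.
  pose proof (dstep U w dw (fun x => 12*111132*C*x^2 + 2*158760*C^2) (fun x => 24*111132*C*x) Uo Hw Hdw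
     ltac:(intros x; auto_derive; auto; simpl; ring) T2) as T3.
  pose proof (dstep U w dw (fun x => 24*111132*C*x) (fun x => 24*111132*C) Uo Hw Hdw
     ltac:(intros x; auto_derive; auto; simpl; ring) T3) as T4.
  pose proof (T4 s Us) as C0. simpl in C0.
  assert (HC0 : C = 0) by lra.
  pose proof (HF s Us) as F0. rewrite Hc, HC0 in F0. unfold Fpol in F0.
  pose proof (Hk s Us) as kp.
  assert (F1 : (kappa s ^ 4 + Derive_n kappa 1 s ^ 2) ^ 2 = 0) by lra.
  assert (0 < kappa s ^ 4) by (apply pow_lt; auto).
  assert (0 <= Derive_n kappa 1 s ^ 2) by (apply pow2_ge_0).
  assert (0 < (kappa s ^ 4 + Derive_n kappa 1 s ^ 2) ^ 2) by (apply pow_lt; lra).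
  lra.
Qed.

Lemma aux_f (k eT : R -> R) (s d1 b : R) : is_derive k s d1 -> is_derive eT s 0 ->
  is_derive (fun v => k v ^ 2 * eT v ^ 2 - b ^ 2 / 4 * (1 - eT v ^ 2)) s (2 * k s * d1 * eT s ^ 2).
Proof.
  intros Hk He. auto_derive.
  - repeat split; try exact I; eexists; eauto.
  - replace (Derive (fun x => k x) s) with d1 by (symmetry; apply is_derive_unique; exact Hk).
    replace (Derive (fun x => eT x) s) with 0 by (symmetry; apply is_derive_unique; exact He). ring.
Qed.

Lemma aux_m (eT eN : R -> R) (s dT dN : R) : is_derive eT s dT -> is_derive eN s dN ->
  is_derive (fun v => eT v ^ 2 + eN v ^ 2) s (2 * eT s * dT + 2 * eN s * dN).
Proof.
  intros H1 H2. auto_derive.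
  - repeat split; try exact I; eexists; eauto.
  - replace (Derive (fun x => eT x) s) with dT by (symmetry; apply is_derive_unique; exact H1).
    replace (Derive (fun x => eN x) s) with dN by (symmetry; apply is_derive_unique; exact H2). ring.
Qed.

Lemma aux_P (kappa : R -> R) (u : R) : ex_derive kappa u ->
  ex_derive (fun x => Derive_n kappa 1 x) u -> ex_derive (fun x => Derive_n kappa 2 x) u ->
  is_derive (fun v => Derive_n kappa 2 v - 2 * kappa v ^ 3) u
    (Derive_n kappa 3 u - 6 * kappa u ^ 2 * Derive_n kappa 1 u).
Proof.
  intros H0 H1 H2. auto_derive.
  - repeat split; auto.
  - fixD kappa u. ring.
Qed.

Lemma ex_mult_ez (f g : R -> R) (u df dg : R) : is_derive f u df -> is_derive g u dg ->
  ex_derive (fun v => f v * g v) u.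
Proof. intros H1 H2. apply ex_derive_mult; eexists; eauto. Qed.

Lemma sq0 (x : R) : x ^ 2 = 0 -> x = 0.
Proof. intros H. destruct (Req_dec x 0); auto. exfalso. apply (pow_nonzero x 2); auto. Qed.

Lemma c2_nz (a b : R) : 4 * a <> b ^ 2 -> c2 a b <> 0.
Proof. unfold c2. intros H Hc. apply H. lra. Qed.

Lemma D1_zero a b s0 s1 gam kappa N B (H : Hyp a b s0 s1 gam kappa N B) (hab : 4 * a <> b ^ 2) :
  forall s, in_open_int s0 s1 s -> Derive_n kappa 1 s = 0.
Proof.
  intros s Hs. destruct (Req_dec (Derive_n kappa 1 s) 0) as [Z|Hne]; [exact Z|exfalso].
  pose proof (exD _ _ _ _ _ _ _ _ H) as HexD.
  assert (loc : locally s (fun u => in_open_int s0 s1 u /\ Derive_n kappa 1 u <> 0)).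
  { apply filter_and. apply Jo; auto. apply (loc_neq_ex (fun x => Derive_n kappa 1 x)); auto. }
  destruct (loc_Ival _ s loc) as [e [He HU]].
  set (U := Ival s e) in *.
  assert (Uo : forall u, U u -> locally u U) by (intros; apply Ival_open; auto).
  assert (UJ : forall u, U u -> in_open_int s0 s1 u) by (intros u Hu; apply (HU u Hu)).
  assert (UD : forall u, U u -> Derive_n kappa 1 u <> 0) by (intros u Hu; apply (HU u Hu)).
  assert (Us : U s) by (unfold U, Ival; lra).
  assert (Hk : forall u, U u -> 0 < kappa u) by (intros u Hu; apply (h_kpos _ _ _ _ _ _ _ _ H u (UJ u Hu))).
  set (eT := fun v => inner a b (gam v) (vel gam v) ez).
  set (eN := fun v => inner a b (gam v) (N v) ez).
  set (eB := fun v => inner a b (gam v) (B v) ez).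
  set (WN := fun v => inner a b (gam v) (N v) (Wv a b (gam v) (vel gam v))).
  set (WB := fun v => inner a b (gam v) (B v) (Wv a b (gam v) (vel gam v))).
  assert (DT : forall u, U u -> is_derive eT u (kappa u * eN u)).
  { intros u Hu. apply (dT _ _ _ _ _ _ _ _ H u (UJ u Hu)). }
  assert (DN : forall u, U u -> is_derive eN u (- kappa u * eT u + WN u)).
  { intros u Hu. apply (dN _ _ _ _ _ _ _ _ H u (UJ u Hu)). }
  assert (DB : forall u, U u -> is_derive eB u (WB u)).
  { intros u Hu. apply (dB _ _ _ _ _ _ _ _ H u (UJ u Hu)). }
  assert (FF : forall u, U u -> eT u ^ 2 + eN u ^ 2 + eB u ^ 2 = 1 /\
     WN u * eN u + WB u * eB u = 0 /\ WN u ^ 2 + WB u ^ 2 = b ^ 2 / 4 * (1 - eT u ^ 2)).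
  { intros u Hu. apply (frame_facts _ _ _ _ _ _ _ _ H u (UJ u Hu)). }
  assert (TE : forall u, U u -> al kappa 5 u = 0 /\
     be kappa 5 u + (Derive_n kappa 2 u - 2 * kappa u ^ 3) * (c1 a b - c2 a b * (eT u ^ 2 + eN u ^ 2)) = 0 /\
     (Derive_n kappa 2 u - 2 * kappa u ^ 3) * c2 a b * eN u * eB u = 0).
  { intros u Hu. apply (tri_eqs _ _ _ _ _ _ _ _ H u (UJ u Hu)). }
  pose proof (c2_nz a b hab) as Hc2.
  assert (HA : forall u, U u -> eN u * eB u = 0).
  { intros u Hu. destruct (Req_dec (eN u * eB u) 0) as [Z|Z]; auto. exfalso.
    assert (l1 := loc_neq_ex (fun v => eN v * eB v) u (ex_mult_ez eN eB u _ _ (DN u Hu) (DB u Hu)) Z).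
    assert (lP : locally u (fun v => Derive_n kappa 2 v - 2 * kappa v ^ 3 = 0)).
    { generalize (filter_and _ _ l1 (Uo u Hu)). apply filter_imp. intros v [Hv1 Hv2].
      destruct (TE v Hv2) as [_ [_ E3]].
      assert (E4 : (Derive_n kappa 2 v - 2 * kappa v ^ 3) * (c2 a b * (eN v * eB v)) = 0) by (rewrite <- E3; ring).
      destruct (Rmult_integral _ _ E4) as [E5|E5]; auto. exfalso.
      apply (Rmult_integral_contrapositive_currified _ _ Hc2 Hv1 E5). }
    pose proof (deriv_loc_zero _ u _ lP (aux_P kappa u (HexD 0%nat u (UJ u Hu)) (HexD 1%nat u (UJ u Hu)) (HexD 2%nat u (UJ u Hu)))) as D3.
    pose proof (locally_singleton _ _ lP) as P0. cbv beta in P0.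
    destruct (TE u Hu) as [A5 _]. unfold al in A5. cbv zeta in A5.
    assert (E : kappa u ^ 3 * Derive_n kappa 1 u = 0).
    { assert (HD2 : Derive_n kappa 2 u = 2 * kappa u ^ 3) by lra.
      assert (HD3 : Derive_n kappa 3 u = 6 * kappa u ^ 2 * Derive_n kappa 1 u) by lra.
      rewrite HD2, HD3 in A5. lra. }
    destruct (Rmult_integral _ _ E) as [E1|E1].
    - pose proof (Hk u Hu). assert (0 < kappa u ^ 3) by (apply pow_lt; lra). lra.
    - apply (UD u Hu E1). }
  destruct (Req_dec b 0) as [Hb0|Hb].
  -
    assert (HWN : forall u, U u -> WN u = 0).
    { intros u Hu. unfold WN. rewrite inner_sym.
      rewrite (inner_ext a b (gam u) _ (fun _ => 0)). apply inner_zero.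
      intros l. apply W0; auto. pose proof (Hk u Hu). pose proof (h_lam _ _ _ _ _ _ _ _ H u (UJ u Hu)). lra. }
    assert (Hm : forall u, U u -> is_derive (fun v => eT v ^ 2 + eN v ^ 2) u 0).
    { intros u Hu. pose proof (aux_m eT eN u _ _ (DT u Hu) (DN u Hu)) as D.
      rewrite HWN in D by auto. replace 0 with (2 * eT u * (kappa u * eN u) + 2 * eN u * (- kappa u * eT u + 0)) by ring.
      exact D. }
    pose proof (const_conv U _ (Ival_convex s e) Hm) as Hmc.
    apply (elim kappa s e (c1 a b - c2 a b * (eT s ^ 2 + eN s ^ 2)) He).
    + exact Hk.
    + exact UD.
    + intros u j Hu. apply HexD. auto.
    + intros u Hu. apply (TE u Hu).
    + intros u Hu. destruct (TE u Hu) as [_ [E2 _]]. rewrite <- (Hmc u s Hu Us). exact E2.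
  -
    assert (Hb2 : 0 < b ^ 2) by (apply pow2_gt_0; exact Hb).
    assert (HBn : forall u, U u -> eN u = 0).
    { intros u Hu. destruct (Req_dec (eN u) 0) as [Z|Z]; auto. exfalso.
      assert (l1 := loc_neq_ex eN u (ex_intro _ _ (DN u Hu)) Z).
      assert (lB : locally u (fun v => eB v = 0)).
      { generalize (filter_and _ _ l1 (Uo u Hu)). apply filter_imp. intros v [Hv1 Hv2].
        pose proof (HA v Hv2) as E. destruct (Rmult_integral _ _ E) as [E1|E1]; auto. contradiction. }
      pose proof (deriv_loc_zero _ u _ lB (DB u Hu)) as WB0.
      pose proof (locally_singleton _ _ lB) as B0. cbv beta in B0.
      destruct (FF u Hu) as [F1 [F2 F3]].
      rewrite WB0, B0 in F2. rewrite WB0 in F3. rewrite B0 in F1.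
      assert (WN0 : WN u = 0).
      { assert (E : WN u * eN u = 0) by lra. destruct (Rmult_integral _ _ E); auto. contradiction. }
      rewrite WN0 in F3.
      assert (eT u ^ 2 = 1) by nra.
      assert (eN u ^ 2 = 0) by lra.
      apply Z. apply sq0; auto. }
    assert (HNW : forall u, U u -> WN u = kappa u * eT u).
    { intros u Hu.
      assert (lN : locally u (fun v => eN v = 0)).
      { generalize (Uo u Hu). apply filter_imp. exact HBn. }
      pose proof (deriv_loc_zero _ u _ lN (DN u Hu)). lra. }
    assert (HdT : forall u, U u -> is_derive eT u 0).
    { intros u Hu. pose proof (DT u Hu) as D. rewrite (HBn u Hu) in D. rewrite Rmult_0_r in D. exact D. }
    destruct (FF s Us) as [F1 [F2 F3]].
    rewrite (HBn s Us) in F1, F2. rewrite (HNW s Us) in F3.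
    destruct (Req_dec (eB s) 0) as [ZB|ZB].
    + rewrite ZB in F1. assert (eT s ^ 2 = 1) by lra.
      rewrite H0 in F3.
      assert (E : (kappa s * eT s) ^ 2 = 0) by nra.
      assert (E2 : kappa s * eT s = 0) by (apply sq0; auto).
      pose proof (Hk s Us).
      destruct (Rmult_integral _ _ E2) as [E3|E3]; [lra|]. rewrite E3 in H0. lra.
    + assert (l1 := loc_neq_ex eB s (ex_intro _ _ (DB s Us)) ZB).
      assert (lf : locally s (fun v => kappa v ^ 2 * eT v ^ 2 - b ^ 2 / 4 * (1 - eT v ^ 2) = 0)).
      { generalize (filter_and _ _ l1 (Uo s Us)). apply filter_imp. intros v [Hv1 Hv2].
        destruct (FF v Hv2) as [G1 [G2 G3]]. rewrite (HBn v Hv2) in G1, G2. rewrite (HNW v Hv2) in G3.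
        assert (WB0 : WB v = 0).
        { assert (E : WB v * eB v = 0) by lra. destruct (Rmult_integral _ _ E); auto. contradiction. }
        rewrite WB0 in G3. lra. }
      pose proof (deriv_loc_zero _ s _ lf (aux_f kappa eT s (Derive_n kappa 1 s) b
          (Derive_correct _ _ (HexD 0%nat s Hs)) (HdT s Us))) as Z.
      pose proof (Hk s Us).
      assert (ET0 : eT s = 0).
      { assert (E : (2 * kappa s * Derive_n kappa 1 s) * eT s ^ 2 = 0) by lra.
        destruct (Rmult_integral _ _ E) as [E1|E1].
        - exfalso. assert (K2 : 2 * kappa s <> 0) by lra.
          apply (Rmult_integral_contrapositive_currified _ _ K2 Hne E1).
        - apply sq0; auto. }
      pose proof (locally_singleton _ _ lf) as f0. cbv beta in f0. rewrite ET0 in f0. lra.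
Qed.

Lemma J_convex (s0 s1 : Rbar) : convex (in_open_int s0 s1).
Proof.
  intros x y z [Hx1 Hx2] [Hy1 Hy2] Hz. unfold in_open_int.
  destruct s0 as [r0| |], s1 as [r1| |]; simpl in *; split; auto; lra.
Qed.

Theorem proposition4p5 (a b : R) (s0 s1 : Rbar) (gam : R -> pt)
  (kappa tau : R -> R) (N B : R -> pt) :
  Rbar_lt s0 s1 ->
  4 * a <> b ^ 2 ->
  (* gam is a smooth curve in M(a,b) *)
  (forall s, in_open_int s0 s1 s -> 0 < lam a (gam s)) ->
  (forall s, in_open_int s0 s1 s -> forall (i : idx) (n : nat),
       ex_derive_n (fun t => gam t i) n s) ->
  (* arc-length parametrization *)
  (forall s, in_open_int s0 s1 s -> inner a b (gam s) (vel gam s) (vel gam s) = 1) ->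
  (* triharmonic *)
  triharmonic a b gam (in_open_int s0 s1) ->
  (* Frenet frame (T, N, B) with curvature kappa > 0 and torsion tau *)
  (forall s, in_open_int s0 s1 s -> forall i : idx,
       ex_derive (fun t => N t i) s /\ ex_derive (fun t => B t i) s) ->
  (forall s, in_open_int s0 s1 s ->
       inner a b (gam s) (N s) (N s) = 1 /\ inner a b (gam s) (B s) (B s) = 1 /\
       inner a b (gam s) (vel gam s) (N s) = 0 /\
       inner a b (gam s) (vel gam s) (B s) = 0 /\
       inner a b (gam s) (N s) (B s) = 0) ->
  (forall s, in_open_int s0 s1 s -> 0 < kappa s) ->
  (forall s, in_open_int s0 s1 s -> forall k : idx,
       cov a b gam (vel gam) s k = kappa s * N s k /\
       cov a b gam N s k = - kappa s * vel gam s k + tau s * B s k /\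
       cov a b gam B s k = - tau s * N s k) ->
  (* vanishing torsion *)
  (forall s, in_open_int s0 s1 s -> tau s = 0) ->
  (* conclusion: constant curvature *)
  forall s t, in_open_int s0 s1 s -> in_open_int s0 s1 t -> kappa s = kappa t.
Proof.
  intros Hlt hab Hlam Hsm Hunit Htri HNB Horth Hkpos Hfr Htau.
  assert (H : Hyp a b s0 s1 gam kappa N B).
  { constructor; auto.
    intros s Hs k. destruct (Hfr s Hs k) as [F1 [F2 F3]]. rewrite (Htau s Hs) in F2, F3.
    split; auto. split.
    - rewrite F2. ring.
    - rewrite F3. ring. }
  intros s t Hs Ht.
  apply (const_conv (in_open_int s0 s1) kappa (J_convex s0 s1)); auto.
  intros u Hu. pose proof (D1_zero _ _ _ _ _ _ _ _ H hab u Hu) as Z.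
  pose proof (Derive_correct _ _ (exD _ _ _ _ _ _ _ _ H 0%nat u Hu)) as D.
  simpl in Z. rewrite <- Z. exact D.
Qed.
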